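(* Let $(\mathcal{A},\otimes,I,\gamma)$ be a braided monoidal category such that $I$ is a regular generator of $\mathcal{A}$ and such that for every object $X$ the functors $-\otimes X$ and $X\otimes -$ preserve colimits. Let $B=(B,m_B,u_B)$ be an algebra in $\mathcal{A}$ and let $\mathcal{A}_B$ be the category of right $B$-modules in $\mathcal{A}$. There is a bijective correspondence between (1) monoidal structures on $\mathcal{A}_B$ such that the forgetful functor $\mathcal{A}_B\to\mathcal{A}$ is strict monoidal, and (2) bialgebra structures $(B,m_B,u_B,\Delta_B,\varepsilon_B)$ on $B$ (with the given underlying algebra).
   Context: Monoidal categories are treated as strict. A right $B$-module is an object $M$ with $\rho_M:M\otimes B\to M$ satisfying $\rho_M\circ(\rho_M\otimes B)=\rho_M\circ(M\otimes m_B)$ and $\rho_M\circ(M\otimes u_B)=\mathrm{id}_M$; morphisms are $\mathcal{A}$-morphisms commuting with actions. A bialgebra in the braided category is an algebra $(B,m,u)$ with a coalgebra structure $(B,\Delta,\epsilon)$ such that $\Delta\circ m=(m\otimes m)\circ(B\otimes\gamma_{B,B}\otimes B)\circ(\Delta\otimes\Delta)$, $\epsilon\circ u=\mathrm{id}_I$, $\Delta\circ u=u\otimes u$, $\epsilon\circ m=\epsilon\otimes\epsilon$. An object $G$ is a regular generator if for every $X$, with $f_X:\coprod_{f:G\to X}G\to X$ the canonical morphism, the fork formed by $f_X$ and the two canonical morphisms $\coprod_{(g,h)}G\rightrightarrows\coprod_{f:G\to X}G$ (indexed by pairs $g,h:G\to\coprod_{f:G\to X}G$ with $f_X\circ g=f_X\circ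 h$) is a coequalizer. A functor is strict monoidal if it preserves tensor products and unit on the nose, with identity structure maps. *)

(* Defs.v *)
From Stdlib Require Import ProofIrrelevance.

Record Cat := {
  ob :> Type;
  hom : ob -> ob -> Type;
  idm : forall a, hom a a;
  comp : forall a b c, hom b c -> hom a b -> hom a c;
  comp_idl : forall a b (f : hom a b), comp a b b (idm b) f = f;
  comp_idr : forall a b (f : hom a b), comp a a b f (idm a) = f;
  comp_assoc : forall a b c d (f : hom a b) (g : hom b c) (h : hom c d),
    comp a c d h (comp a b c g f) = comp a b d (comp b c d h g) f }.

Arguments hom {_} _ _.
Arguments idm {_} _.
Arguments comp {_ _ _ _} _ _.
Arguments comp_idl {_ _ _} _.
Arguments comp_idr {_ _ _} _.
Arguments comp_assoc {_ _ _ _ _} _ _ _.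

Notation "g ∘ f" := (comp g f) (at level 40, left associativity).

Definition cast {C : Cat} {a b : C} (e : a = b) : hom a b :=
  match e in (_ = y) return hom a y with eq_refl => idm a end.

Record Functor (J C : Cat) := {
  fob : J -> C;
  fhom : forall i j : J, hom i j -> hom (fob i) (fob j);
  fhom_id : forall i, fhom i i (idm i) = idm (fob i);
  fhom_comp : forall i j k (u : hom i j) (v : hom j k),
      fhom i k (v ∘ u) = fhom j k v ∘ fhom i j u }.
Arguments fob {_ _} _ _.
Arguments fhom {_ _} _ {_ _} _.

Record SMC (C : Cat) := {
  tob : C -> C -> C;
  thom : forall a b c d : C, hom a b -> hom c d -> hom (tob a c) (tob b d);
  tI : C;
  thom_id : forall a c : C, thom a a c c (idm a) (idm c) = idm (tob a c);
  thom_comp : forall (a b c a' b' c' : C) (f : hom a b) (g : hom b c)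
      (f' : hom a' b') (g' : hom b' c'),
      thom a c a' c' (g ∘ f) (g' ∘ f') = thom b c b' c' g g' ∘ thom a b a' b' f f';
  tassoc : forall a b c : C, tob (tob a b) c = tob a (tob b c);
  tunitl : forall a : C, tob tI a = a;
  tunitr : forall a : C, tob a tI = a;
  thom_assoc : forall (a a' b b' c c' : C) (f : hom a a') (g : hom b b') (h : hom c c'),
      cast (tassoc a' b' c') ∘ thom _ _ _ _ (thom _ _ _ _ f g) h
      = thom _ _ _ _ f (thom _ _ _ _ g h) ∘ cast (tassoc a b c);
  thom_unitl : forall (a a' : C) (f : hom a a'),
      cast (tunitl a') ∘ thom _ _ _ _ (idm tI) f = f ∘ cast (tunitl a);
  thom_unitr : forall (a a' : C) (f : hom a a'),
      cast (tunitr a') ∘ thom _ _ _ _ f (idm tI) = f ∘ cast (tunitr a) }.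

Arguments tob {_} _ _ _.
Arguments thom {_} _ {_ _ _ _} _ _.
Arguments tI {_} _.
Arguments tassoc {_} _ _ _ _.
Arguments tunitl {_} _ _.
Arguments tunitr {_} _ _.

Record Braiding (A : Cat) (T : SMC A) := {
  br : forall a b : A, hom (tob T a b) (tob T b a);
  br_nat : forall (a a' b b' : A) (f : hom a a') (g : hom b b'),
      br a' b' ∘ thom T f g = thom T g f ∘ br a b;
  br_iso : forall a b : A, exists g : hom (tob T b a) (tob T a b),
      g ∘ br a b = idm _ /\ br a b ∘ g = idm _;
  br_hex1 : forall a b c : A,
      br a (tob T b c)
      = cast (eq_sym (tassoc T b c a)) ∘ thom T (idm b) (br a c)
        ∘ cast (tassoc T b a c) ∘ thom T (br a b) (idm c)
        ∘ cast (eq_sym (tassoc T a b c));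
  br_hex2 : forall a b c : A,
      br (tob T a b) c
      = cast (tassoc T c a b) ∘ thom T (br a c) (idm b)
        ∘ cast (eq_sym (tassoc T a c b)) ∘ thom T (idm a) (br b c)
        ∘ cast (tassoc T a b c) }.
Arguments br {_ _} _ _ _.

Definition IsColimit {J C : Cat} (F : J -> C)
    (Fh : forall i j : J, hom i j -> hom (F i) (F j))
    (L : C) (cc : forall j, hom (F j) L) : Prop :=
  (forall (i j : J) (u : hom i j), cc j ∘ Fh i j u = cc i) /\
  (forall (Y : C) (c : forall j, hom (F j) Y),
      (forall (i j : J) (u : hom i j), c j ∘ Fh i j u = c i) ->
      exists! h : hom L Y, forall j, h ∘ cc j = c j).

Definition PreservesColimits {C D : Cat} (G : C -> D)
    (Gh : forall a b : C, hom a b -> hom (G a) (G b)) : Prop :=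
  forall (J : Cat) (Fd : Functor J C) (L : C) (cc : forall j, hom (fob Fd j) L),
    IsColimit (fob Fd) (fun i j u => fhom Fd u) L cc ->
    IsColimit (fun j => G (fob Fd j)) (fun i j u => Gh _ _ (fhom Fd u))
              (G L) (fun j => Gh _ _ (cc j)).

Definition IsCoproduct {C : Cat} {K : Type} (F : K -> C) (P : C)
    (inj : forall k, hom (F k) P) : Prop :=
  forall (Y : C) (g : forall k, hom (F k) Y),
    exists! h : hom P Y, forall k, h ∘ inj k = g k.

Definition IsCoequalizer {C : Cat} {a b : C} (p q : hom a b) (c : C) (e : hom b c) : Prop :=
  e ∘ p = e ∘ q /\
  (forall (Y : C) (k : hom b Y), k ∘ p = k ∘ q -> exists! h : hom c Y, h ∘ e = k).

Definition PairIdx {C : Cat} {G S X : C} (fX : hom S X) : Type :=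
  { gh : hom G S * hom G S | fX ∘ fst gh = fX ∘ snd gh }.

Definition RegularGenerator {C : Cat} (G : C) : Prop :=
  forall X : C,
    exists (S : C) (inj : forall f : hom G X, hom G S),
      IsCoproduct (fun _ : hom G X => G) S inj /\
      forall fX : hom S X, (forall f, fX ∘ inj f = f) ->
        exists (P : C) (inj2 : forall pr : @PairIdx C G S X fX, hom G P),
          IsCoproduct (fun _ : PairIdx fX => G) P inj2 /\
          forall p1 p2 : hom P S,
            (forall pr, p1 ∘ inj2 pr = fst (proj1_sig pr)) ->
            (forall pr, p2 ∘ inj2 pr = snd (proj1_sig pr)) ->
            IsCoequalizer p1 p2 X fX.

Record MonStruct (C : Cat) := {
  mo : C -> C -> C;
  mh : forall a b c d : C, hom a b -> hom c d -> hom (mo a c) (mo b d);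
  mI : C;
  malpha : forall a b c : C, hom (mo (mo a b) c) (mo a (mo b c));
  mlam : forall a : C, hom (mo mI a) a;
  mrho : forall a : C, hom (mo a mI) a;
  mh_id : forall a c : C, mh a a c c (idm a) (idm c) = idm (mo a c);
  mh_comp : forall (a b c a' b' c' : C) (f : hom a b) (g : hom b c)
      (f' : hom a' b') (g' : hom b' c'),
      mh a c a' c' (g ∘ f) (g' ∘ f') = mh b c b' c' g g' ∘ mh a b a' b' f f';
  malpha_nat : forall (a a' b b' c c' : C) (f : hom a a') (g : hom b b') (h : hom c c'),
      malpha a' b' c' ∘ mh _ _ _ _ (mh _ _ _ _ f g) h
      = mh _ _ _ _ f (mh _ _ _ _ g h) ∘ malpha a b c;
  mlam_nat : forall (a a' : C) (f : hom a a'),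
      mlam a' ∘ mh _ _ _ _ (idm mI) f = f ∘ mlam a;
  mrho_nat : forall (a a' : C) (f : hom a a'),
      mrho a' ∘ mh _ _ _ _ f (idm mI) = f ∘ mrho a;
  malpha_iso : forall a b c : C, exists g : hom (mo a (mo b c)) (mo (mo a b) c),
      g ∘ malpha a b c = idm _ /\ malpha a b c ∘ g = idm _;
  mlam_iso : forall a : C, exists g : hom a (mo mI a),
      g ∘ mlam a = idm _ /\ mlam a ∘ g = idm _;
  mrho_iso : forall a : C, exists g : hom a (mo a mI),
      g ∘ mrho a = idm _ /\ mrho a ∘ g = idm _;
  pentagon : forall a b c d : C,
      mh _ _ _ _ (idm a) (malpha b c d) ∘ malpha a (mo b c) d
        ∘ mh _ _ _ _ (malpha a b c) (idm d)
      = malpha a b (mo c d) ∘ malpha (mo a b) c d;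
  triangle : forall a b : C,
      mh _ _ _ _ (idm a) (mlam b) ∘ malpha a mI b = mh _ _ _ _ (mrho a) (idm b) }.

Arguments mo {_} _ _ _.
Arguments mh {_} _ {_ _ _ _} _ _.
Arguments mI {_} _.
Arguments malpha {_} _ _ _ _.
Arguments mlam {_} _ _.
Arguments mrho {_} _ _.

(* U : (C, M) -> (A, T) is strict monoidal: it preserves tensor and unit on
   the nose and all structure maps are identities (i.e. the canonical
   identifications [cast]). *)
Definition IsStrictMonoidalFunctor {C A : Cat} (M : MonStruct C) (T : SMC A)
    (U : Functor C A) : Prop :=
  exists (eo : forall a b : C, fob U (mo M a b) = tob T (fob U a) (fob U b))
         (eI : fob U (mI M) = tI T),
    (forall (a b c d : C) (f : hom a b) (g : hom c d),
        cast (eo b d) ∘ fhom U (mh M f g) = thom T (fhom U f) (fhom U g) ∘ cast (eo a c)) /\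
    (forall a b c : C,
        cast (eq_trans (eo a (mo M b c)) (f_equal (fun x => tob T (fob U a) x) (eo b c)))
          ∘ fhom U (malpha M a b c)
        = cast (tassoc T (fob U a) (fob U b) (fob U c))
          ∘ cast (eq_trans (eo (mo M a b) c) (f_equal (fun x => tob T x (fob U c)) (eo a b)))) /\
    (forall a : C,
        fhom U (mlam M a)
        = cast (tunitl T (fob U a))
          ∘ cast (eq_trans (eo (mI M) a) (f_equal (fun x => tob T x (fob U a)) eI))) /\
    (forall a : C,
        fhom U (mrho M a)
        = cast (tunitr T (fob U a))
          ∘ cast (eq_trans (eo a (mI M)) (f_equal (fun x => tob T (fob U a) x) eI))).

Section Modules.
Variables (A : Cat) (T : SMC A) (B : A) (mB : hom (tob T B B) B) (uB : hom (tI T) B).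

Definition IsAlgebra : Prop :=
  mB ∘ thom T mB (idm B) = mB ∘ thom T (idm B) mB ∘ cast (tassoc T B B B) /\
  mB ∘ thom T uB (idm B) = cast (tunitl T B) /\
  mB ∘ thom T (idm B) uB = cast (tunitr T B).

Definition IsRightModule (M : A) (rho : hom (tob T M B) M) : Prop :=
  rho ∘ thom T rho (idm B) = rho ∘ thom T (idm M) mB ∘ cast (tassoc T M B B) /\
  rho ∘ thom T (idm M) uB = cast (tunitr T M).

Record RMod := { rm_ob : A; rm_act : hom (tob T rm_ob B) rm_ob;
                 rm_ax : IsRightModule rm_ob rm_act }.

Definition IsModMor (M N : RMod) (f : hom (rm_ob M) (rm_ob N)) : Prop :=
  f ∘ rm_act M = rm_act N ∘ thom T f (idm B).

Record ModMor (M N : RMod) := { mm_hom : hom (rm_ob M) (rm_ob N);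
                                mm_ax : IsModMor M N mm_hom }.
Arguments mm_hom {M N} _.

Lemma ModMor_eq (M N : RMod) (f g : ModMor M N) : mm_hom f = mm_hom g -> f = g.
Proof.
  destruct f as [f hf], g as [g hg]; simpl; intros ->.
  f_equal; apply proof_irrelevance.
Qed.

Definition mod_id (M : RMod) : ModMor M M.
Proof.
  refine {| mm_hom := idm (rm_ob M) |}.
  unfold IsModMor. rewrite thom_id, comp_idl, comp_idr. reflexivity.
Defined.

Definition mod_comp (M N P : RMod) (g : ModMor N P) (f : ModMor M N) : ModMor M P.
Proof.
  refine {| mm_hom := mm_hom g ∘ mm_hom f |}.
  unfold IsModMor.
  destruct f as [f hf], g as [g hg]; unfold IsModMor in *; simpl.
  rewrite <- comp_assoc, hf, comp_assoc, hg, <- comp_assoc.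
  rewrite <- thom_comp, comp_idl. reflexivity.
Defined.

Definition ModCat : Cat.
Proof.
  refine {| ob := RMod; hom := ModMor; idm := mod_id; comp := mod_comp |}.
  - intros a b f; apply ModMor_eq; simpl; apply comp_idl.
  - intros a b f; apply ModMor_eq; simpl; apply comp_idr.
  - intros a b c d f g h; apply ModMor_eq; simpl; apply comp_assoc.
Defined.

Definition Forget : Functor ModCat A.
Proof.
  refine {| fob := (rm_ob : ModCat -> A);
            fhom := fun (M N : ModCat) (f : hom M N) => mm_hom f |};
  reflexivity.
Defined.

Definition ModMonStr : Type :=
  { M : MonStruct ModCat | IsStrictMonoidalFunctor M T Forget }.

Variable Br : Braiding A T.

Definition e4 (X Y Z W : A) :
    tob T (tob T X Y) (tob T Z W) = tob T (tob T X (tob T Y Z)) W :=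
  eq_trans (eq_sym (tassoc T (tob T X Y) Z W))
           (f_equal (fun x => tob T x W) (tassoc T X Y Z)).

Definition IsBialgebra (D : hom B (tob T B B)) (eps : hom B (tI T)) : Prop :=
  thom T D (idm B) ∘ D = cast (eq_sym (tassoc T B B B)) ∘ thom T (idm B) D ∘ D /\
  thom T eps (idm B) ∘ D = cast (eq_sym (tunitl T B)) /\
  thom T (idm B) eps ∘ D = cast (eq_sym (tunitr T B)) /\
  D ∘ mB = thom T mB mB ∘ cast (eq_sym (e4 B B B B))
             ∘ thom T (thom T (idm B) (br Br B B)) (idm B)
             ∘ cast (e4 B B B B) ∘ thom T D D /\
  eps ∘ uB = idm (tI T) /\
  D ∘ uB = thom T uB uB ∘ cast (eq_sym (tunitl T (tI T))) /\
  eps ∘ mB = cast (tunitl T (tI T)) ∘ thom T eps eps.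

Definition BialgStr : Type :=
  { p : hom B (tob T B B) * hom B (tI T) | IsBialgebra (fst p) (snd p) }.

Definition tensor_action (M N : RMod) (D : hom B (tob T B B)) :
    hom (tob T (tob T (rm_ob M) (rm_ob N)) B) (tob T (rm_ob M) (rm_ob N)) :=
  thom T (rm_act M) (rm_act N) ∘ cast (eq_sym (e4 (rm_ob M) B (rm_ob N) B))
    ∘ thom T (thom T (idm (rm_ob M)) (br Br (rm_ob N) B)) (idm B)
    ∘ cast (e4 (rm_ob M) (rm_ob N) B B)
    ∘ thom T (idm (tob T (rm_ob M) (rm_ob N))) D.

Definition Corresponds (s : ModMonStr) (x : BialgStr) : Prop :=
  (forall (M N : RMod)
          (e : rm_ob (mo (proj1_sig s) M N) = tob T (rm_ob M) (rm_ob N)),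
      cast e ∘ rm_act (mo (proj1_sig s) M N)
      = tensor_action M N (fst (proj1_sig x)) ∘ cast (f_equal (fun z => tob T z B) e)) /\
  (forall e : rm_ob (mI (proj1_sig s)) = tI T,
      cast e ∘ rm_act (mI (proj1_sig s))
      = snd (proj1_sig x) ∘ cast (tunitl T B) ∘ cast (f_equal (fun z => tob T z B) e)).

End Modules.

(* Main.v *)
Require Import Defs.
From Stdlib Require Import ProofIrrelevance FunctionalExtensionality Setoid.

Section Casts.
Context {C : Cat}.

Lemma cast_irr (a : C) (e : a = a) : cast e = idm a.
Proof. rewrite (proof_irrelevance _ e eq_refl). reflexivity. Qed.

Lemma cast_pi (a b : C) (e e' : a = b) : cast e = cast e'.
Proof. rewrite (proof_irrelevance _ e e'). reflexivity. Qed.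

Lemma cast_comp (a b c : C) (e1 : a = b) (e2 : b = c) :
  cast e2 ∘ cast e1 = cast (eq_trans e1 e2).
Proof. destruct e1, e2. simpl. apply comp_idl. Qed.

Lemma cast_compK (a b c d : C) (f : hom d a) (e1 : a = b) (e2 : b = c) :
  cast e2 ∘ (cast e1 ∘ f) = cast (eq_trans e1 e2) ∘ f.
Proof. rewrite comp_assoc, cast_comp. reflexivity. Qed.

Definition heq {a b a' b' : C} (f : hom a b) (g : hom a' b') : Prop :=
  exists (e1 : a = a') (e2 : b = b'), cast e2 ∘ f = g ∘ cast e1.

Lemma heq_eq {a b : C} (f g : hom a b) : heq f g -> f = g.
Proof.
  intros [e1 [e2 H]]. rewrite !cast_irr, comp_idl, comp_idr in H. exact H.
Qed.

Lemma eq_heq {a b : C} (f g : hom a b) : f = g -> heq f g.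
Proof. intros ->. exists eq_refl, eq_refl. simpl. rewrite comp_idl, comp_idr. reflexivity. Qed.

Lemma heq_refl {a b : C} (f : hom a b) : heq f f.
Proof. apply eq_heq; reflexivity. Qed.

Lemma heq_sym {a b a' b' : C} (f : hom a b) (g : hom a' b') : heq f g -> heq g f.
Proof.
  intros [e1 [e2 H]]. subst. simpl in H. rewrite comp_idl, comp_idr in H. subst.
  apply heq_refl.
Qed.

Lemma heq_trans {a b a' b' a'' b'' : C} (f : hom a b) (g : hom a' b') (h : hom a'' b'') :
  heq f g -> heq g h -> heq f h.
Proof.
  intros [e1 [e2 H]] [e3 [e4 H']]. subst. simpl in *.
  rewrite comp_idl, comp_idr in H. rewrite comp_idl, comp_idr in H'. subst. apply heq_refl.
Qed.

Lemma heq_comp {a b c a' b' c' : C} (f : hom a b) (g : hom b c) (f' : hom a' b') (g' : hom b' c') :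
  heq f f' -> heq g g' -> heq (g ∘ f) (g' ∘ f').
Proof.
  intros [e1 [e2 H]] [e3 [e4 H']]. subst. simpl in *.
  rewrite comp_idl, comp_idr in H. subst.
  rewrite cast_irr, comp_idr, comp_idl in H'. subst. apply heq_refl.
Qed.

Lemma heq_cast {a b : C} (e : a = b) : heq (cast e) (idm a).
Proof. destruct e. apply heq_refl. Qed.

Lemma heq_cast' {a b : C} (e : a = b) : heq (cast e) (idm b).
Proof. destruct e. apply heq_refl. Qed.

Lemma heq_castl {a b c a' b' : C} (f : hom a b) (e : b = c) (g : hom a' b') :
  heq f g -> heq (cast e ∘ f) g.
Proof. intros H. destruct e. simpl. rewrite comp_idl. exact H. Qed.

Lemma heq_castr {a b c a' b' : C} (f : hom b c) (e : a = b) (g : hom a' b') :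
  heq f g -> heq (f ∘ cast e) g.
Proof. intros H. destruct e. simpl. rewrite comp_idr. exact H. Qed.

Lemma heq_castl' {a b c a' b' : C} (f : hom a b) (e : b = c) (g : hom a' b') :
  heq g f -> heq g (cast e ∘ f).
Proof. intros H. apply heq_sym, heq_castl, heq_sym, H. Qed.

Lemma heq_castr' {a b c a' b' : C} (f : hom b c) (e : a = b) (g : hom a' b') :
  heq g f -> heq g (f ∘ cast e).
Proof. intros H. apply heq_sym, heq_castr, heq_sym, H. Qed.

Lemma slide {a b a' b' : C} (f : hom a b) (g : hom a' b') (e1 : a = a') (e2 : b = b') :
  heq f g -> cast e2 ∘ f = g ∘ cast e1.
Proof.
  intros [e3 [e4 H]]. rewrite (proof_irrelevance _ e1 e3), (proof_irrelevance _ e2 e4). exact H.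
Qed.

Lemma heq_idm {a b : C} (e : a = b) : heq (idm a) (idm b).
Proof. destruct e; apply heq_refl. Qed.

Lemma heq_compl_id {a b c a' b' : C} (g : hom b c) (f : hom a b) (f' : hom a' b') :
  heq g (idm b') -> heq f f' -> heq (g ∘ f) f'.
Proof. intros Hg Hf. eapply heq_trans. apply (heq_comp _ _ _ _ Hf Hg). rewrite comp_idl. apply heq_refl. Qed.

Lemma heq_compr_id {a b c b' c' : C} (g : hom b c) (f : hom a b) (g' : hom b' c') :
  heq f (idm b') -> heq g g' -> heq (g ∘ f) g'.
Proof. intros Hf Hg. eapply heq_trans. apply (heq_comp _ _ _ _ Hf Hg). rewrite comp_idr. apply heq_refl. Qed.

Lemma slide_r {a b a' b' : C} (f : hom a b) (g : hom a' b') (e1 : a' = a) (e2 : b' = b) :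
  heq f g -> f ∘ cast e1 = cast e2 ∘ g.
Proof.
  intros [e3 [e4 H]]. subst. rewrite !cast_irr in *. rewrite comp_idl, comp_idr in H. subst.
  rewrite comp_idl, comp_idr. reflexivity.
Qed.

Lemma slide_rK {a b a' b' x : C} (f : hom a b) (g : hom a' b') (e1 : a' = a) (e2 : b' = b) (h : hom x a') :
  heq f g -> f ∘ (cast e1 ∘ h) = cast e2 ∘ (g ∘ h).
Proof. intros H. rewrite !comp_assoc, (slide_r f g e1 e2 H). reflexivity. Qed.

Lemma slideK {a b a' b' x : C} (f : hom a b) (g : hom a' b') (e1 : a = a') (e2 : b = b') (h : hom x a) :
  heq f g -> cast e2 ∘ (f ∘ h) = g ∘ (cast e1 ∘ h).
Proof. intros H. rewrite !comp_assoc, (slide f g e1 e2 H). reflexivity. Qed.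

Lemma heq_cod {a b a' b' : C} {f : hom a b} {g : hom a' b'} : heq f g -> b = b'.
Proof. intros [e1 [e2 _]]; exact e2. Qed.
Lemma heq_dom {a b a' b' : C} {f : hom a b} {g : hom a' b'} : heq f g -> a = a'.
Proof. intros [e1 [e2 _]]; exact e1. Qed.

Lemma slide_rK' {a b a' b' x : C} {f : hom a b} {g : hom a' b'} (H : heq f g) (e1 : a' = a) (h : hom x a') :
  f ∘ (cast e1 ∘ h) = cast (eq_sym (heq_cod H)) ∘ (g ∘ h).
Proof. apply slide_rK, H. Qed.

Lemma slide_r' {a b a' b' : C} {f : hom a b} {g : hom a' b'} (H : heq f g) (e1 : a' = a) :
  f ∘ cast e1 = cast (eq_sym (heq_cod H)) ∘ g.
Proof. apply slide_r, H. Qed.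

Lemma slideK' {a b a' b' x : C} {f : hom a b} {g : hom a' b'} (H : heq f g) (e2 : b = b') (h : hom x a) :
  cast e2 ∘ (f ∘ h) = g ∘ (cast (heq_dom H) ∘ h).
Proof. apply slideK, H. Qed.

Lemma slide' {a b a' b' : C} {f : hom a b} {g : hom a' b'} (H : heq f g) (e2 : b = b') :
  cast e2 ∘ f = g ∘ cast (heq_dom H).
Proof. apply slide, H. Qed.

Lemma cast_cancel_r {a b c : C} (f g : hom b c) (e : a = b) : f ∘ cast e = g ∘ cast e -> f = g.
Proof. destruct e. simpl. rewrite !comp_idr. auto. Qed.

Lemma cast_cancel_l {a b c : C} (f g : hom a b) (e : b = c) : cast e ∘ f = cast e ∘ g -> f = g.
Proof. destruct e. simpl. rewrite !comp_idl. auto. Qed.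

Lemma compK {a b b' c x : C} (f : hom a b) (g : hom b c) (f' : hom a b') (g' : hom b' c) (h : hom x a) :
  g ∘ f = g' ∘ f' -> g ∘ (f ∘ h) = g' ∘ (f' ∘ h).
Proof. intros H. rewrite !comp_assoc, H. reflexivity. Qed.

Lemma cast_compKK (a b c d : C) (f : hom d a) (e1 : a = b) (e2 : b = c) :
  cast e2 ∘ (cast e1 ∘ f) = cast (eq_trans e1 e2) ∘ f.
Proof. apply cast_compK. Qed.

Lemma heq_compl_idd {a b c a' b' d : C} (g : hom b c) (f : hom a b) (f' : hom a' b') :
  heq g (idm d) -> heq f f' -> heq (g ∘ f) f'.
Proof.
  intros Hg Hf. destruct Hg as [e1 [e2 Hg]]. subst. rewrite !cast_irr, comp_idl, comp_idr in Hg. subst.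
  rewrite comp_idl. exact Hf.
Qed.

Lemma heq_compr_idd {a b c b' c' d : C} (g : hom b c) (f : hom a b) (g' : hom b' c') :
  heq f (idm d) -> heq g g' -> heq (g ∘ f) g'.
Proof.
  intros Hf Hg. destruct Hf as [e1 [e2 Hf]]. subst. rewrite !cast_irr, comp_idl, comp_idr in Hf. subst.
  rewrite comp_idr. exact Hg.
Qed.

Lemma heq_cast_idm {a b : C} (g : hom a b) (e : a = b) : heq g (cast e) -> heq g (idm a).
Proof. intros H. eapply heq_trans. exact H. apply heq_cast. Qed.

End Casts.

Section Mon.
Context {A : Cat} (T : SMC A).

Lemma heq_thom {a b c d a' b' c' d' : A} (f : hom a b) (g : hom c d) (f' : hom a' b') (g' : hom c' d') :
  heq f f' -> heq g g' -> heq (thom T f g) (thom T f' g').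
Proof.
  intros [e1 [e2 H]] [e3 [e4 H']]. subst. simpl in *.
  rewrite comp_idl, comp_idr in H. rewrite comp_idl, comp_idr in H'. subst. apply heq_refl.
Qed.

Lemma heq_assoc {a b c a' b' c' : A} (f : hom a a') (g : hom b b') (h : hom c c') :
  heq (thom T (thom T f g) h) (thom T f (thom T g h)).
Proof. exists (tassoc T a b c), (tassoc T a' b' c'). apply thom_assoc. Qed.

Lemma heq_unitl {a a' : A} (f : hom a a') : heq (thom T (idm (tI T)) f) f.
Proof. exists (tunitl T a), (tunitl T a'). apply thom_unitl. Qed.

Lemma heq_unitr {a a' : A} (f : hom a a') : heq (thom T f (idm (tI T))) f.
Proof. exists (tunitr T a), (tunitr T a'). apply thom_unitr. Qed.

Lemma thom_cast {a b c d : A} (e1 : a = b) (e2 : c = d) :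
  thom T (cast e1) (cast e2) = cast (f_equal2 (tob T) e1 e2).
Proof. destruct e1, e2. rewrite thom_id, cast_irr. reflexivity. Qed.

Lemma heq_thom_id {a b c d : A} (f : hom a b) (g : hom c d) :
  heq f (idm b) -> heq g (idm d) -> heq (thom T f g) (idm (tob T b d)).
Proof. intros H1 H2. eapply heq_trans. apply (heq_thom _ _ _ _ H1 H2). rewrite thom_id. apply heq_refl. Qed.

Lemma thom_compK {a b c a' b' c' x : A} (f : hom a b) (g : hom b c) (f' : hom a' b') (g' : hom b' c')
  (h : hom x (tob T a a')) :
  thom T g g' ∘ (thom T f f' ∘ h) = thom T (g ∘ f) (g' ∘ f') ∘ h.
Proof. rewrite comp_assoc, <- thom_comp. reflexivity. Qed.

End Mon.

Section Braid.
Context {A : Cat} (T : SMC A) (Br : Braiding A T).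

Lemma idem_iso_id {a : A} (g h : hom a a) : g ∘ g = g -> h ∘ g = idm a -> g = idm a.
Proof.
  intros H1 H2. transitivity (h ∘ g ∘ g). rewrite H2, comp_idl; reflexivity. rewrite <- comp_assoc, H1. exact H2.
Qed.

Lemma heq_br_l (x y c : A) : x = y -> heq (br Br x c) (br Br y c).
Proof. intros e; destruct e; apply heq_refl. Qed.
Lemma heq_br_r (x y c : A) : x = y -> heq (br Br c x) (br Br c y).
Proof. intros e; destruct e; apply heq_refl. Qed.

Lemma br_unit_l (c : A) : heq (br Br (tI T) c) (idm c).
Proof.
  set (I := tI T).
  set (g := cast (tunitr T c) ∘ br Br I c ∘ cast (eq_sym (tunitl T c))).
  assert (Hg : heq (br Br I c) g).
  { unfold g. apply heq_castr', heq_castl', heq_refl. }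
  assert (Hgg : g ∘ g = g).
  { apply heq_eq.
    assert (E : heq (br Br (tob T I I) c) (br Br I c)).
    { apply heq_br_l. apply tunitl. }
    assert (H1 : heq (br Br (tob T I I) c) (g ∘ g)).
    { rewrite (br_hex2 _ _ Br I I c).
      rewrite <- !comp_assoc.
      apply heq_castl. apply heq_comp.
      - apply heq_castl. apply heq_castr. eapply heq_trans. apply heq_unitl. apply Hg.
      - eapply heq_trans. apply heq_unitr. apply Hg. }
    eapply heq_trans. apply heq_sym, H1. eapply heq_trans. apply E. exact Hg. }
  destruct (br_iso _ _ Br I c) as [h [Hh1 Hh2]].
  assert (Hg1 : g = idm c).
  { apply (idem_iso_id g (cast (tunitl T c) ∘ h ∘ cast (eq_sym (tunitr T c)))); auto.
    unfold g. rewrite <- !comp_assoc.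
    rewrite (comp_assoc _ _ (cast (eq_sym (tunitr T c)))), cast_comp, cast_irr, comp_idl.
    rewrite (comp_assoc _ _ h), Hh1, comp_idl, cast_comp, cast_irr. reflexivity. }
  rewrite <- Hg1. exact Hg.
Qed.

Lemma br_unit_r (c : A) : heq (br Br c (tI T)) (idm c).
Proof.
  set (I := tI T).
  set (g := cast (tunitl T c) ∘ br Br c I ∘ cast (eq_sym (tunitr T c))).
  assert (Hg : heq (br Br c I) g).
  { unfold g. apply heq_castr', heq_castl', heq_refl. }
  assert (Hgg : g ∘ g = g).
  { apply heq_eq.
    assert (E : heq (br Br c (tob T I I)) (br Br c I)).
    { apply heq_br_r. apply tunitl. }
    assert (H1 : heq (br Br c (tob T I I)) (g ∘ g)).
    { rewrite (br_hex1 _ _ Br c I I).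
      rewrite <- !comp_assoc.
      apply heq_castl. apply heq_comp.
      - apply heq_castl. apply heq_castr. eapply heq_trans. apply heq_unitr. apply Hg.
      - eapply heq_trans. apply heq_unitl. apply Hg. }
    eapply heq_trans. apply heq_sym, H1. eapply heq_trans. apply E. exact Hg. }
  destruct (br_iso _ _ Br c I) as [h [Hh1 Hh2]].
  assert (Hg1 : g = idm c).
  { apply (idem_iso_id g (cast (tunitr T c) ∘ h ∘ cast (eq_sym (tunitl T c)))); auto.
    unfold g. rewrite <- !comp_assoc.
    rewrite (comp_assoc _ _ (cast (eq_sym (tunitl T c)))), cast_comp, cast_irr, comp_idl.
    rewrite (comp_assoc _ _ h), Hh1, comp_idl, cast_comp, cast_irr. reflexivity. }
  rewrite <- Hg1. exact Hg.
Qed.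

End Braid.

Section ModTh.
Context {A : Cat} (T : SMC A) (Br : Braiding A T) (B : A) (mB : hom (tob T B B) B) (uB : hom (tI T) B).

Local Notation "a ⊗ b" := (tob T a b) (at level 30, right associativity).
Local Notation "f ⊠ g" := (thom T f g) (at level 35).
Local Notation I := (tI T).
Local Notation RM := (RMod A T B mB uB).
Local Notation ob_ := (rm_ob A T B mB uB).
Local Notation act := (rm_act A T B mB uB).
Local Notation tact := (tensor_action A T B mB uB Br).

Definition sig4 (a b c d : A) : hom ((a ⊗ b) ⊗ (c ⊗ d)) ((a ⊗ c) ⊗ (b ⊗ d)) :=
  cast (eq_sym (e4 A T a c b d)) ∘ ((idm a ⊠ br Br b c) ⊠ idm d) ∘ cast (e4 A T a b c d).

Lemma tact_sig (M N : RM) (D : hom B (B ⊗ B)) :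
  tact M N D = (act M ⊠ act N) ∘ (sig4 (ob_ M) (ob_ N) B B ∘ (idm (ob_ M ⊗ ob_ N) ⊠ D)).
Proof. unfold tensor_action, sig4. rewrite <- !comp_assoc. reflexivity. Qed.

Lemma heq_e4 {a b c d a' b' c' d' : A} (f : hom a a') (g : hom b b') (h : hom c c') (k : hom d d') :
  heq ((f ⊠ g) ⊠ (h ⊠ k)) ((f ⊠ (g ⊠ h)) ⊠ k).
Proof.
  eapply heq_trans. apply heq_sym, heq_assoc.
  apply heq_thom. apply heq_assoc. apply heq_refl.
Qed.

Lemma sig4_nat {a b c d a' b' c' d' : A} (f : hom a a') (g : hom b b') (h : hom c c') (k : hom d d') :
  ((f ⊠ h) ⊠ (g ⊠ k)) ∘ sig4 a b c d = sig4 a' b' c' d' ∘ ((f ⊠ g) ⊠ (h ⊠ k)).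
Proof.
  unfold sig4. rewrite <- !comp_assoc.
  rewrite (slide_rK' (heq_e4 f h g k)).
  assert (Hm : ((f ⊠ (h ⊠ g)) ⊠ k) ∘ ((idm a ⊠ br Br b c) ⊠ idm d)
             = ((idm a' ⊠ br Br b' c') ⊠ idm d') ∘ ((f ⊠ (g ⊠ h)) ⊠ k)).
  { rewrite <- !thom_comp, !comp_idl, !comp_idr, br_nat. reflexivity. }
  rewrite (compK _ _ _ _ _ Hm).
  rewrite (cast_pi _ _ (eq_sym (heq_cod _)) (eq_sym (e4 A T a' c' b' d'))). f_equal. f_equal.
  apply slide_r. apply heq_sym, heq_e4.
Qed.

Lemma tact_nat (M M' N N' : RM) (D : hom B (B ⊗ B)) (f : hom (ob_ M) (ob_ M')) (g : hom (ob_ N) (ob_ N')) :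
  IsModMor A T B mB uB M M' f -> IsModMor A T B mB uB N N' g ->
  (f ⊠ g) ∘ tact M N D = tact M' N' D ∘ ((f ⊠ g) ⊠ idm B).
Proof.
  unfold IsModMor. intros Hf Hg. rewrite !tact_sig.
  rewrite (comp_assoc _ (act M ⊠ act N)), <- thom_comp, Hf, Hg, thom_comp.
  rewrite <- !comp_assoc. f_equal.
  rewrite (comp_assoc _ (sig4 _ _ _ _)), sig4_nat, <- !comp_assoc. f_equal.
  rewrite <- !thom_comp, thom_id, !comp_idl, !comp_idr. reflexivity.
Qed.

Definition xbar (X : RM) (x : hom I (ob_ X)) : hom B (ob_ X) :=
  act X ∘ (x ⊠ idm B) ∘ cast (eq_sym (tunitl T B)).

Lemma sig4_II : heq (sig4 I I B B) (idm (B ⊗ B)).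
Proof.
  unfold sig4. apply heq_castr, heq_castl.
  eapply heq_trans. apply heq_thom. apply heq_thom. apply heq_refl. apply (br_unit_l T Br B). apply heq_refl.
  rewrite !thom_id. apply heq_idm. apply (f_equal (fun z => z ⊗ B) (tunitl T B)).
Qed.

Lemma heq_castthom (a b c d : A) (e1 : a = b) (e2 : c = d) : heq (cast e1 ⊠ cast e2) (idm (a ⊗ c)).
Proof. rewrite thom_cast. apply heq_cast. Qed.

Lemma tact_eval (X Y : RM) (D : hom B (B ⊗ B)) (x : hom I (ob_ X)) (y : hom I (ob_ Y)) :
  heq (tact X Y D ∘ ((x ⊠ y) ⊠ idm B)) ((xbar X x ⊠ xbar Y y) ∘ D).
Proof.
  rewrite tact_sig. rewrite <- !comp_assoc.
  assert (E1 : (idm (ob_ X ⊗ ob_ Y) ⊠ D) ∘ ((x ⊠ y) ⊠ idm B) = ((x ⊠ y) ⊠ (idm B ⊠ idm B)) ∘ (idm (I ⊗ I) ⊠ D)).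
  { rewrite <- !thom_comp, thom_id, !comp_idl, !comp_idr. reflexivity. }
  rewrite E1, (comp_assoc _ _ (sig4 _ _ _ _)), <- sig4_nat.
  rewrite <- comp_assoc, (comp_assoc _ _ (act X ⊠ act Y)), <- thom_comp.
  unfold xbar. rewrite (thom_comp _ T _ _ _ _ _ _ (cast _)), <- comp_assoc.
  apply heq_comp. 2: apply heq_refl.
  eapply heq_trans.
  - apply heq_compl_id. apply sig4_II.
    eapply heq_trans. apply heq_thom. apply (heq_idm (tunitl T I)). apply heq_refl. apply heq_unitl.
  - apply heq_sym. apply heq_compl_id. apply heq_castthom. apply heq_refl.
Qed.


Lemma thom_compl {a b c : A} (f : hom a b) (g : hom b c) (d : A) : (g ∘ f) ⊠ idm d = (g ⊠ idm d) ∘ (f ⊠ idm d).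
Proof. rewrite <- thom_comp, comp_idl. reflexivity. Qed.

Lemma thom_compr {a b c : A} (f : hom a b) (g : hom b c) (d : A) : idm d ⊠ (g ∘ f) = (idm d ⊠ g) ∘ (idm d ⊠ f).
Proof. rewrite <- thom_comp, comp_idl. reflexivity. Qed.

Lemma xbar_mor (X : RM) (x : hom I (ob_ X)) :
  xbar X x ∘ mB = act X ∘ (xbar X x ⊠ idm B).
Proof.
  destruct (rm_ax _ _ _ _ _ X) as [HX1 HX2].
  unfold xbar. rewrite !thom_compl.
  rewrite !comp_assoc, HX1.
  rewrite <- !comp_assoc. apply heq_eq. apply heq_comp. 2: apply heq_refl.
  apply (heq_trans _ (x ⊠ mB)).
  - apply (heq_trans _ ((x ⊠ idm B) ∘ (idm I ⊠ mB))).
    + apply heq_comp. apply heq_castl. apply heq_sym, heq_unitl. apply heq_refl.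
    + rewrite <- thom_comp, comp_idl, comp_idr. apply heq_refl.
  - apply (heq_trans _ ((idm (ob_ X) ⊠ mB) ∘ (x ⊠ (idm B ⊠ idm B)))).
    + rewrite thom_id, <- thom_comp, comp_idl, comp_idr. apply heq_refl.
    + apply heq_sym. apply heq_comp. 2: apply heq_refl.
      apply heq_castl. apply heq_compr_id.
      * eapply heq_trans. apply heq_thom_id. apply heq_cast'. apply heq_refl.
        apply heq_idm. apply tassoc.
      * apply heq_assoc.
Qed.

Lemma xbar_u (X : RM) (x : hom I (ob_ X)) : xbar X x ∘ uB = x.
Proof.
  destruct (rm_ax _ _ _ _ _ X) as [HX1 HX2].
  unfold xbar. apply heq_eq. rewrite <- !comp_assoc.
  apply (heq_trans _ (act X ∘ ((x ⊠ idm B) ∘ (idm I ⊠ uB)))).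
  - apply heq_comp. 2: apply heq_refl. apply heq_comp. 2: apply heq_refl.
    apply heq_castl. apply heq_sym, heq_unitl.
  - rewrite <- thom_comp, comp_idl, comp_idr.
    replace (x ⊠ uB) with ((idm (ob_ X) ⊠ uB) ∘ (x ⊠ idm I)) by (rewrite <- thom_comp, comp_idl, comp_idr; reflexivity).
    rewrite comp_assoc, HX2.
    apply heq_castl. apply heq_unitr.
Qed.

End ModTh.

Definition Disc (K : Type) : Cat.
Proof.
  refine {| ob := K; hom := fun i j => i = j; idm := fun i => eq_refl;
            comp := fun a b c g f => eq_trans f g |}.
  - intros a b f. destruct f. reflexivity.
  - intros a b f. destruct f. reflexivity.
  - intros a b c d f g h. destruct f, g, h. reflexivity.
Defined.

Definition ConstF {C : Cat} (K : Type) (x : C) : Functor (Disc K) C.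
Proof.
  refine {| fob := fun _ => x; fhom := fun i j u => idm x |}.
  - reflexivity.
  - intros. rewrite comp_idl. reflexivity.
Defined.

Definition Par_hom (i j : bool) : Type :=
  match i, j with
  | false, false => unit | true, true => unit | false, true => bool | true, false => Empty_set end.

Definition Par_id (i : bool) : Par_hom i i := match i with false => tt | true => tt end.

Definition Par_comp (a b c : bool) : Par_hom b c -> Par_hom a b -> Par_hom a c :=
  match a, b, c with
  | false, false, false => fun _ _ => tt
  | false, false, true => fun g _ => g
  | false, true, true => fun _ f => f
  | true, true, true => fun _ _ => tt
  | true, true, false => fun g _ => match g with end
  | true, false, _ => fun _ f => match f with end
  | false, true, false => fun g _ => match g with end
  end.

Definition Par : Cat.
Proof.
  refine {| ob := bool; hom := Par_hom; idm := Par_id; comp := Par_comp |}.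
  - intros [|] [|] f; simpl in *; try destruct f; reflexivity.
  - intros [|] [|] f; simpl in *; try destruct f; reflexivity.
  - intros [|] [|] [|] [|] f g h; simpl in *; try destruct f; try destruct g; try destruct h; reflexivity.
Defined.

Section PairF.
Context {C : Cat} {P S : C} (p1 p2 : hom P S).

Definition PF_ob (i : bool) : C := if i then S else P.
Definition PF_hom (i j : bool) : Par_hom i j -> hom (PF_ob i) (PF_ob j) :=
  match i, j with
  | false, false => fun _ => idm P
  | true, true => fun _ => idm S
  | false, true => fun b => if b then p1 else p2
  | true, false => fun u => match u with end
  end.

Definition PairF : Functor Par C.
Proof.
  refine (@Build_Functor Par C PF_ob PF_hom _ _).
  - intros [|]; reflexivity.
  - intros [|] [|] [|] u v; simpl in *; try destruct u; try destruct v; simpl;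
      rewrite ?comp_idl, ?comp_idr; reflexivity.
Defined.
End PairF.

Section JE.
Context {A : Cat} (T : SMC A).
Local Notation "a ⊗ b" := (tob T a b) (at level 30, right associativity).
Local Notation "f ⊠ g" := (thom T f g) (at level 35).
Local Notation I := (tI T).

Hypothesis HI : RegularGenerator I.
Hypothesis Hr : forall X : A,
      PreservesColimits (fun a : A => tob T a X) (fun a b (f : hom a b) => thom T f (idm X)).

Lemma JE1 (X Z W : A) (h h' : hom (X ⊗ Z) W) :
  (forall p : hom I X, h ∘ (p ⊠ idm Z) = h' ∘ (p ⊠ idm Z)) -> h = h'.
Proof.
  intros Hp.
  destruct (HI X) as [S [inj [Hcop Hrest]]].
  destruct (Hcop X (fun f => f)) as [fX [HfX _]].
  destruct (Hrest fX HfX) as [P [inj2 [Hcop2 Hcoeq]]].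
  destruct (Hcop2 S (fun pr => fst (proj1_sig pr))) as [p1 [Hp1 _]].
  destruct (Hcop2 S (fun pr => snd (proj1_sig pr))) as [p2 [Hp2 _]].
  specialize (Hcoeq p1 p2 Hp1 Hp2).
  (* step 1: coproduct preserved *)
  assert (Hcol1 : IsColimit (C := A) (J := Disc (hom I X)) (fob (ConstF (hom I X) I))
                    (fun i j u => fhom (ConstF (hom I X) I) u) S inj).
  { split.
    - intros i j u. simpl in u. destruct u. simpl. apply comp_idr.
    - intros Y c Hc. apply (Hcop Y c). }
  pose proof (Hr Z _ _ _ _ Hcol1) as [_ Hcol1'].
  assert (E1 : h ∘ (fX ⊠ idm Z) = h' ∘ (fX ⊠ idm Z)).
  { destruct (Hcol1' W (fun j => h ∘ (j ⊠ idm Z))) as [m [_ Hm]].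
    - intros i j u. simpl in u. destruct u. simpl. rewrite thom_id. apply comp_idr.
    - transitivity m; [symmetry|]; apply Hm; intros j; simpl;
        rewrite <- comp_assoc, <- thom_comp, comp_idl, HfX; [reflexivity| symmetry; apply Hp]. }
  (* step 2: coequalizer preserved *)
  destruct Hcoeq as [Hcq1 Hcq2].
  assert (Hcol2 : IsColimit (fob (PairF p1 p2)) (fun i j u => fhom (PairF p1 p2) u) X
                    (fun j => if j as b return hom (PF_ob b) X then fX else fX ∘ p1)).
  { split.
    - intros [|] [|] u; simpl in *; try destruct u; simpl; rewrite ?comp_idr; auto.
    - intros Y c Hc.
      assert (Hc1 : c true ∘ p1 = c false) by exact (Hc false true true).
      assert (Hc2 : c true ∘ p2 = c false) by exact (Hc false true false).
      destruct (Hcq2 Y (c true)) as [m [Hm Hmu]].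
      { transitivity (c false); [exact Hc1 | symmetry; exact Hc2]. }
      exists m. split.
      + intros [|]; simpl. exact Hm. rewrite comp_assoc, Hm. exact Hc1.
      + intros m' Hm'. apply Hmu. exact (Hm' true). }
  pose proof (Hr Z _ _ _ _ Hcol2) as [_ Hcol2'].
  destruct (Hcol2' W (fun j => h ∘ ((if j as b return hom (@PF_ob A P S b) X then fX else fX ∘ p1) ⊠ idm Z)))
    as [m [_ Hm]].
  - intros i j u. simpl. rewrite <- comp_assoc, <- thom_comp, comp_idl.
    f_equal. f_equal.
    destruct i, j; simpl in *; try destruct u; rewrite ?comp_idr; auto.
  - transitivity m; [symmetry|]; apply Hm; intros [|]; simpl; try reflexivity.
    + symmetry; exact E1.
    + rewrite <- (comp_idl (idm Z)), (thom_comp _ T _ _ _ _ _ _ p1 fX (idm Z) (idm Z)), !comp_assoc, E1. reflexivity.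
Qed.

Lemma JE2 (X Y Z W : A) (h h' : hom ((X ⊗ Y) ⊗ Z) W) :
  (forall (p : hom I X) (q : hom I Y), h ∘ ((p ⊠ q) ⊠ idm Z) = h' ∘ ((p ⊠ q) ⊠ idm Z)) -> h = h'.
Proof.
  intros Hpq.
  assert (K : h ∘ cast (eq_sym (tassoc T X Y Z)) = h' ∘ cast (eq_sym (tassoc T X Y Z))).
  { apply JE1. intros p.
    assert (K2 : h ∘ cast (eq_sym (tassoc T X Y Z)) ∘ (p ⊠ idm (Y ⊗ Z)) ∘ cast (eq_sym (tunitl T (Y ⊗ Z)))
              = h' ∘ cast (eq_sym (tassoc T X Y Z)) ∘ (p ⊠ idm (Y ⊗ Z)) ∘ cast (eq_sym (tunitl T (Y ⊗ Z)))).
    { apply JE1. intros q.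
      assert (Hs : forall (hh : hom ((X ⊗ Y) ⊗ Z) W),
                 hh ∘ cast (eq_sym (tassoc T X Y Z)) ∘ (p ⊠ idm (Y ⊗ Z)) ∘ cast (eq_sym (tunitl T (Y ⊗ Z))) ∘ (q ⊠ idm Z)
                 = hh ∘ ((p ⊠ q) ⊠ idm Z) ∘ cast (f_equal (fun z => z ⊗ Z) (eq_sym (tunitl T I)))).
      { intros hh. rewrite <- !comp_assoc. f_equal. apply slide.
        apply (heq_trans _ ((p ⊠ idm (Y ⊗ Z)) ∘ (idm I ⊠ (q ⊠ idm Z)))).
        - apply heq_comp. apply heq_castl. apply heq_sym, heq_unitl. apply heq_refl.
        - rewrite <- thom_comp, comp_idl, comp_idr. apply heq_sym, heq_assoc. }
      rewrite !Hs, Hpq. reflexivity. }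
    exact (cast_cancel_r _ _ _ K2). }
  exact (cast_cancel_r _ _ _ K).
Qed.

Lemma JE1c (X Z Q W : A) (e : X ⊗ Z = Q) (h h' : hom Q W) :
  (forall p : hom I X, h ∘ cast e ∘ (p ⊠ idm Z) = h' ∘ cast e ∘ (p ⊠ idm Z)) -> h = h'.
Proof. intros H. apply (cast_cancel_r _ _ e). apply JE1. exact H. Qed.

Lemma JE3 (X Y Z W V : A) (h h' : hom (((X ⊗ Y) ⊗ Z) ⊗ W) V) :
  (forall (p : hom I X) (q : hom I Y) (r : hom I Z), h ∘ (((p ⊠ q) ⊠ r) ⊠ idm W) = h' ∘ (((p ⊠ q) ⊠ r) ⊠ idm W)) -> h = h'.
Proof.
  intros Hpqr. apply JE2. intros x r.
  set (c := f_equal (fun z => z ⊗ W) (eq_sym (tunitr T (X ⊗ Y)))).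
  set (c3 := f_equal (fun z => z ⊗ W) (tunitr T I)).
  set (k := fun hh : hom (((X ⊗ Y) ⊗ Z) ⊗ W) V => hh ∘ ((idm (X ⊗ Y) ⊠ r) ⊠ idm W) ∘ cast c).
  assert (Kk : k h = k h').
  { apply JE2. intros p q.
    assert (Hs : forall hh, k hh ∘ ((p ⊠ q) ⊠ idm W) =
       hh ∘ (((p ⊠ q) ⊠ r) ⊠ idm W) ∘ cast (f_equal (fun z => z ⊗ W) (eq_sym (tunitr T (I ⊗ I))))).
    { intros hh. unfold k. rewrite <- !comp_assoc. f_equal. apply heq_eq.
      apply (heq_trans _ (((idm (X ⊗ Y) ⊠ r) ⊠ idm W) ∘ (((p ⊠ q) ⊠ idm I) ⊠ idm W))).
      - apply heq_comp. 2: apply heq_refl. apply heq_castl. apply heq_thom. 2: apply heq_refl.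
        apply heq_sym, heq_unitr.
      - rewrite <- !thom_comp, !comp_idl, comp_idr. apply heq_sym, heq_castr, heq_refl. }
    rewrite !Hs, Hpqr. reflexivity. }
  assert (Hs : forall hh, hh ∘ ((x ⊠ r) ⊠ idm W) = k hh ∘ (x ⊠ idm W) ∘ cast c3).
  { intros hh. unfold k. rewrite <- !comp_assoc. f_equal. apply heq_eq.
    apply (heq_trans _ (((idm (X ⊗ Y) ⊠ r) ⊠ idm W) ∘ ((x ⊠ idm I) ⊠ idm W))).
    - rewrite <- !thom_comp, !comp_idl, comp_idr. apply heq_refl.
    - apply heq_comp. 2: apply heq_refl. apply heq_sym. apply heq_castl, heq_castr.
      apply heq_thom. 2: apply heq_refl. apply heq_sym, heq_unitr. }
  rewrite !Hs, Kk. reflexivity.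
Qed.

End JE.

Section DirA.
Context {A : Cat} (T : SMC A) (Br : Braiding A T) (B : A) (mB : hom (tob T B B) B) (uB : hom (tI T) B).
Context (HB : IsAlgebra A T B mB uB).
Context (HI : RegularGenerator (tI T)).
Context (Hr : forall X : A,
      PreservesColimits (fun a : A => tob T a X) (fun a b (f : hom a b) => thom T f (idm X))).

Local Notation "a ⊗ b" := (tob T a b) (at level 30, right associativity).
Local Notation "f ⊠ g" := (thom T f g) (at level 35).
Local Notation I := (tI T).
Local Notation RM := (RMod A T B mB uB).
Local Notation ob_ := (rm_ob A T B mB uB).
Local Notation act := (rm_act A T B mB uB).
Local Notation tact := (tensor_action A T B mB uB Br).
Local Notation xb := (xbar T B mB uB).

Definition Bm : RM := Build_RMod A T B mB uB B mB (conj (proj1 HB) (proj2 (proj2 HB))).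

Lemma xbar_modmor (X : RM) (x : hom I (ob_ X)) : IsModMor A T B mB uB Bm X (xb X x).
Proof. unfold IsModMor. simpl. apply xbar_mor. Qed.

Lemma tact_eval_u (M N : RM) (D : hom B (B ⊗ B)) (p : hom I (ob_ M)) (q : hom I (ob_ N)) :
  tact M N D ∘ ((p ⊠ q) ⊠ idm B) = (xb M p ⊠ xb N q) ∘ D ∘ cast (heq_dom (tact_eval T Br B mB uB M N D p q)).
Proof.
  apply heq_eq. apply heq_castr'. apply tact_eval.
Qed.

Lemma tact_natB (M N : RM) (D : hom B (B ⊗ B)) (f : hom B (ob_ M)) (g : hom B (ob_ N)) :
  IsModMor A T B mB uB Bm M f -> IsModMor A T B mB uB Bm N g ->
  (f ⊠ g) ∘ tact Bm Bm D = tact M N D ∘ ((f ⊠ g) ⊠ idm B).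
Proof. intros. exact (tact_nat T Br B mB uB Bm M Bm N D f g H H0). Qed.

Section WithD.
Variables (D : hom B (B ⊗ B)).

Lemma tact_assoc_gen (M N : RM) :
  D ∘ mB = (mB ⊠ mB) ∘ (sig4 T Br B B B B ∘ (D ⊠ D)) ->
  tact M N D ∘ (tact M N D ⊠ idm B)
  = tact M N D ∘ (idm (ob_ M ⊗ ob_ N) ⊠ mB) ∘ cast (tassoc T (ob_ M ⊗ ob_ N) B B).
Proof.
  intros Hcomp.
  set (P := ob_ M ⊗ ob_ N). set (τ := tact M N D).
  apply (cast_cancel_r _ _ (eq_sym (tassoc T P B B))).
  apply (JE2 T HI Hr (ob_ M) (ob_ N) (B ⊗ B)). intros p q.
  apply heq_eq.
  apply (heq_trans _ ((xb M p ⊠ xb N q) ∘ (D ∘ mB))).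
  - rewrite <- !comp_assoc.
    assert (Hs : heq ((p ⊠ q) ⊠ idm (B ⊗ B)) (((p ⊠ q) ⊠ idm B) ⊠ idm B)).
    { rewrite <- thom_id. apply heq_sym, heq_assoc. }
    rewrite (slide' Hs).
    rewrite (comp_assoc _ _ (tact M N D ⊠ idm B)), <- thom_comp, comp_idl.
    rewrite comp_assoc. apply heq_castr.
    apply (heq_trans _ (τ ∘ (((xb M p ⊠ xb N q) ∘ D) ⊠ idm B))).
    { apply heq_comp. 2: apply heq_refl. apply heq_thom. 2: apply heq_refl. apply tact_eval. }
    rewrite thom_compl, comp_assoc. unfold τ.
    rewrite <- (tact_natB M N D _ _ (xbar_modmor M p) (xbar_modmor N q)).
    rewrite <- comp_assoc. apply heq_comp. 2: apply heq_refl.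
    rewrite tact_sig, Hcomp, <- !comp_assoc, <- thom_comp, comp_idl, comp_idr. apply heq_refl.
  - apply heq_sym. rewrite <- !comp_assoc, cast_compK, cast_irr, comp_idl.
    replace ((idm P ⊠ mB) ∘ ((p ⊠ q) ⊠ idm (B ⊗ B))) with (((p ⊠ q) ⊠ idm B) ∘ (idm (I ⊗ I) ⊠ mB))
      by (rewrite <- !thom_comp, !comp_idl, !comp_idr; reflexivity).
    rewrite comp_assoc, (comp_assoc _ _ (xb M p ⊠ xb N q)).
    apply heq_comp.
    + eapply heq_trans. apply heq_thom. apply (heq_idm (tunitl T I)). apply heq_refl. apply heq_unitl.
    + apply tact_eval.
Qed.

Lemma tact_unit_gen (M N : RM) :
  D ∘ uB = (uB ⊠ uB) ∘ cast (eq_sym (tunitl T I)) ->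
  tact M N D ∘ (idm (ob_ M ⊗ ob_ N) ⊠ uB) = cast (tunitr T (ob_ M ⊗ ob_ N)).
Proof.
  intros Hdu.
  apply (JE2 T HI Hr (ob_ M) (ob_ N) I). intros p q.
  apply heq_eq.
  apply (heq_trans _ (p ⊠ q)).
  - rewrite <- comp_assoc. replace ((idm (ob_ M ⊗ ob_ N) ⊠ uB) ∘ ((p ⊠ q) ⊠ idm I)) with (((p ⊠ q) ⊠ idm B) ∘ (idm (I ⊗ I) ⊠ uB))
      by (rewrite <- !thom_comp, !comp_idl, !comp_idr; reflexivity).
    rewrite comp_assoc.
    apply (heq_trans _ ((xb M p ⊠ xb N q) ∘ D ∘ uB)).
    + apply heq_comp.
      * eapply heq_trans. apply heq_thom. apply (heq_idm (tunitl T I)). apply heq_refl. apply heq_unitl.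
      * apply tact_eval.
    + rewrite <- comp_assoc, Hdu, comp_assoc, <- thom_comp, !xbar_u. apply heq_castr. apply heq_refl.
  - apply heq_sym. apply heq_castl. apply heq_unitr.
Qed.

Variable eps : hom B I.

Lemma unit_mod :
  eps ∘ uB = idm I -> eps ∘ mB = cast (tunitl T I) ∘ (eps ⊠ eps) ->
  IsRightModule A T B mB uB I (eps ∘ cast (tunitl T B)).
Proof.
  intros Heu Hem. split.
  - apply heq_eq. apply (heq_trans _ (eps ⊠ eps)).
    + apply (heq_trans _ ((eps ∘ cast (tunitl T B)) ∘ (eps ⊠ idm B))).
      * apply heq_comp. 2: apply heq_refl. apply heq_thom. 2: apply heq_refl. apply heq_castr. apply heq_refl.
      * replace (eps ⊠ eps) with ((idm I ⊠ eps) ∘ (eps ⊠ idm B)) by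
          (rewrite <- thom_comp, comp_idl, comp_idr; reflexivity).
        apply heq_comp. apply heq_refl. apply heq_castr. apply heq_sym, heq_unitl.
    + rewrite <- !comp_assoc, (comp_assoc _ (cast (tunitl T B))), <- (thom_unitl _ T).
      rewrite <- comp_assoc, (comp_assoc _ _ (idm I ⊠ eps)), <- thom_comp, comp_idl, Hem.
      apply heq_sym, heq_castl, heq_castr. eapply heq_trans. apply heq_unitl. apply heq_castl, heq_refl.
  - rewrite <- comp_assoc, (thom_unitl _ T), comp_assoc, Heu, comp_idl. apply cast_pi.
Qed.

End WithD.

Lemma tact_eval' (X Y : RM) (D : hom B (B ⊗ B)) {i j : A} (x : hom i (ob_ X)) (y : hom j (ob_ Y))
  (x' : hom I (ob_ X)) (y' : hom I (ob_ Y)) :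
  heq x x' -> heq y y' ->
  heq (tact X Y D ∘ ((x ⊠ y) ⊠ idm B)) ((xb X x' ⊠ xb Y y') ∘ D).
Proof.
  intros Hx Hy. eapply heq_trans. 2: apply tact_eval.
  apply heq_comp. 2: apply heq_refl. apply heq_thom. apply heq_thom; auto. apply heq_refl.
Qed.

Lemma compat_sig (D : hom B (B ⊗ B)) :
  D ∘ mB = (mB ⊠ mB) ∘ cast (eq_sym (e4 A T B B B B)) ∘ ((idm B ⊠ br Br B B) ⊠ idm B)
             ∘ cast (e4 A T B B B B) ∘ (D ⊠ D) ->
  D ∘ mB = (mB ⊠ mB) ∘ (sig4 T Br B B B B ∘ (D ⊠ D)).
Proof. intros H. rewrite H. unfold sig4. rewrite <- !comp_assoc. reflexivity. Qed.

Section Bialg.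
Variables (D : hom B (B ⊗ B)) (eps : hom B I).
Hypothesis H : IsBialgebra A T B mB uB Br D eps.

Definition TM (M N : RM) : RM :=
  Build_RMod A T B mB uB (ob_ M ⊗ ob_ N) (tact M N D)
    (conj (tact_assoc_gen D M N (compat_sig D (proj1 (proj2 (proj2 (proj2 H))))))
          (tact_unit_gen D M N (proj1 (proj2 (proj2 (proj2 (proj2 (proj2 H)))))))).

Definition UM : RM :=
  Build_RMod A T B mB uB I (eps ∘ cast (tunitl T B))
    (unit_mod eps (proj1 (proj2 (proj2 (proj2 (proj2 H))))) (proj2 (proj2 (proj2 (proj2 (proj2 (proj2 H))))))).

Lemma xb_tensor (M N : RM) (m : hom I (ob_ M)) (n : hom I (ob_ N)) :
  heq (xb (TM M N) ((m ⊠ n) ∘ cast (eq_sym (tunitl T I)))) ((xb M m ⊠ xb N n) ∘ D).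
Proof.
  unfold xbar at 1. change (rm_act A T B mB uB (TM M N)) with (tact M N D).
  apply heq_castr. eapply heq_trans. 2: apply tact_eval.
  apply heq_comp. 2: apply heq_refl. apply heq_thom. 2: apply heq_refl. apply heq_castr, heq_refl.
Qed.

Lemma tact_eval2 (X Y : RM) {i j : A} (x : hom i (ob_ X)) (y : hom j (ob_ Y))
  (x' : hom I (ob_ X)) (y' : hom I (ob_ Y)) (g : hom B (ob_ X)) (g' : hom B (ob_ Y)) :
  heq x x' -> heq y y' -> heq (xb X x') g -> heq (xb Y y') g' ->
  heq (tact X Y D ∘ ((x ⊠ y) ⊠ idm B)) ((g ⊠ g') ∘ D).
Proof.
  intros Hx Hy Hg Hg'. eapply heq_trans. apply (tact_eval' X Y D x y x' y' Hx Hy).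
  apply heq_comp. apply heq_refl. apply heq_thom; auto.
Qed.

Lemma alpha_mor (M N P : RM) :
  IsModMor A T B mB uB (TM (TM M N) P) (TM M (TM N P)) (cast (tassoc T (ob_ M) (ob_ N) (ob_ P))).
Proof.
  pose proof (proj1 H) as Hcoass.
  unfold IsModMor. change (rm_act A T B mB uB (TM (TM M N) P)) with (tact (TM M N) P D).
  change (rm_act A T B mB uB (TM M (TM N P))) with (tact M (TM N P) D).
  apply (JE3 T HI Hr). intros m n r. apply heq_eq.
  apply (heq_trans _ ((xb M m ⊠ (xb N n ⊠ xb P r)) ∘ ((idm B ⊠ D) ∘ D))).
  - rewrite <- comp_assoc. apply heq_castl.
    eapply heq_trans.
    apply (tact_eval2 (TM M N) P (m ⊠ n) r ((m ⊠ n) ∘ cast (eq_sym (tunitl T I))) r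
             ((xb M m ⊠ xb N n) ∘ D) (xb P r)).
    apply heq_sym, heq_castr, heq_refl. apply heq_refl. apply xb_tensor. apply heq_refl.
    apply (heq_trans _ (((xb M m ⊠ xb N n) ⊠ xb P r) ∘ ((D ⊠ idm B) ∘ D))).
    { rewrite comp_assoc. apply heq_comp. apply heq_refl. apply eq_heq. rewrite <- thom_comp, comp_idr. reflexivity. }
    rewrite Hcoass, <- !comp_assoc, (comp_assoc _ (cast _)).
    apply heq_comp. apply heq_refl. apply heq_castr, heq_assoc.
  - apply heq_sym. rewrite <- comp_assoc, <- thom_comp, comp_idl.
    apply (heq_trans _ (tact M (TM N P) D ∘ ((m ⊠ (n ⊠ r)) ⊠ idm B))).
    { apply heq_comp. 2: apply heq_refl. apply heq_thom. 2: apply heq_refl. apply heq_castl, heq_assoc. }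
    eapply heq_trans.
    apply (tact_eval2 M (TM N P) m (n ⊠ r) m ((n ⊠ r) ∘ cast (eq_sym (tunitl T I)))
             (xb M m) ((xb N n ⊠ xb P r) ∘ D)).
    apply heq_refl. apply heq_castr', heq_refl. apply heq_refl. apply xb_tensor.
    rewrite comp_assoc. apply heq_comp. apply heq_refl. apply eq_heq. rewrite <- thom_comp, comp_idr. reflexivity.
Qed.

Lemma xb_UM : heq (xb UM (idm I)) eps.
Proof.
  unfold xbar. change (rm_act A T B mB uB UM) with (eps ∘ cast (tunitl T B)).
  rewrite thom_id, comp_idr. apply heq_castr, heq_castr, heq_refl.
Qed.

Lemma lambda_mor (M : RM) :
  IsModMor A T B mB uB (TM UM M) M (cast (tunitl T (ob_ M))).
Proof.
  pose proof (proj1 (proj2 H)) as Hcl.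
  unfold IsModMor. change (rm_act A T B mB uB (TM UM M)) with (tact UM M D).
  apply (JE1c T HI Hr (ob_ M) B _ _ (f_equal (fun z => z ⊗ B) (eq_sym (tunitl T (ob_ M)))) ).
  intros m. apply heq_eq. rewrite <- !comp_assoc.
  apply (heq_trans _ (xb M m)).
  - apply heq_castl.
    apply (heq_trans _ (tact UM M D ∘ ((idm I ⊠ m) ⊠ idm B))).
    { apply heq_comp. 2: apply heq_refl. apply heq_castl. apply heq_thom. 2: apply heq_refl. apply heq_sym, heq_unitl. }
    eapply heq_trans. apply (tact_eval2 UM M (idm I) m (idm I) m eps (xb M m)).
    apply heq_refl. apply heq_refl. apply xb_UM. apply heq_refl.
    apply (heq_trans _ ((idm I ⊠ xb M m) ∘ ((eps ⊠ idm B) ∘ D))).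
    { rewrite comp_assoc. apply heq_comp. apply heq_refl. apply eq_heq.
      rewrite <- thom_comp, comp_idl, comp_idr. reflexivity. }
    rewrite Hcl. apply heq_castr, heq_unitl.
  - apply heq_sym. apply (heq_trans _ (act M ∘ (m ⊠ idm B))).
    + apply heq_comp. 2: apply heq_refl.
      apply heq_compl_id. apply heq_thom_id. apply heq_cast'. apply heq_refl. apply heq_castl, heq_refl.
    + unfold xbar. apply heq_castr', heq_refl.
Qed.

Lemma rho_mor (M : RM) :
  IsModMor A T B mB uB (TM M UM) M (cast (tunitr T (ob_ M))).
Proof.
  pose proof (proj1 (proj2 (proj2 H))) as Hcr.
  unfold IsModMor. change (rm_act A T B mB uB (TM M UM)) with (tact M UM D).
  apply (JE1c T HI Hr (ob_ M) B _ _ (f_equal (fun z => z ⊗ B) (eq_sym (tunitr T (ob_ M)))) ).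
  intros m. apply heq_eq. rewrite <- !comp_assoc.
  apply (heq_trans _ (xb M m)).
  - apply heq_castl.
    apply (heq_trans _ (tact M UM D ∘ ((m ⊠ idm I) ⊠ idm B))).
    { apply heq_comp. 2: apply heq_refl. apply heq_castl. apply heq_thom. 2: apply heq_refl. apply heq_sym, heq_unitr. }
    eapply heq_trans. apply (tact_eval2 M UM m (idm I) m (idm I) (xb M m) eps).
    apply heq_refl. apply heq_refl. apply heq_refl. apply xb_UM.
    apply (heq_trans _ ((xb M m ⊠ idm I) ∘ ((idm B ⊠ eps) ∘ D))).
    { rewrite comp_assoc. apply heq_comp. apply heq_refl. apply eq_heq.
      rewrite <- thom_comp, comp_idl, comp_idr. reflexivity. }
    rewrite Hcr. apply heq_castr, heq_unitr.
  - apply heq_sym. apply (heq_trans _ (act M ∘ (m ⊠ idm B))).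
    + apply heq_comp. 2: apply heq_refl.
      apply heq_compl_id. apply heq_thom_id. apply heq_cast'. apply heq_refl. apply heq_castl, heq_refl.
    + unfold xbar. apply heq_castr', heq_refl.
Qed.

End Bialg.
End DirA.

Section Build.
Context {A : Cat} (T : SMC A) (Br : Braiding A T) (B : A) (mB : hom (tob T B B) B) (uB : hom (tI T) B).
Context (HB : IsAlgebra A T B mB uB).
Context (HI : RegularGenerator (tI T)).
Context (Hr : forall X : A,
      PreservesColimits (fun a : A => tob T a X) (fun a b (f : hom a b) => thom T f (idm X))).

Local Notation "a ⊗ b" := (tob T a b) (at level 30, right associativity).
Local Notation "f ⊠ g" := (thom T f g) (at level 35).
Local Notation I := (tI T).
Local Notation RM := (RMod A T B mB uB).
Local Notation ob_ := (rm_ob A T B mB uB).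
Local Notation act := (rm_act A T B mB uB).
Local Notation tact := (tensor_action A T B mB uB Br).
Local Notation MC := (ModCat A T B mB uB).
Local Notation MM := (ModMor A T B mB uB).
Local Notation mmh := (mm_hom A T B mB uB _ _).

Lemma modmor_inv (X Y : RM) (f : hom (ob_ X) (ob_ Y)) (g : hom (ob_ Y) (ob_ X)) :
  g ∘ f = idm _ -> f ∘ g = idm _ -> IsModMor A T B mB uB X Y f -> IsModMor A T B mB uB Y X g.
Proof.
  unfold IsModMor. intros H1 H2 Hf.
  transitivity (g ∘ act Y ∘ ((f ∘ g) ⊠ idm B)).
  { rewrite H2, thom_id, comp_idr. reflexivity. }
  rewrite thom_compl, comp_assoc, <- (comp_assoc _ _ g), <- Hf, comp_assoc, H1, comp_idl. reflexivity.
Qed.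

Lemma cast_inv1 {a b : A} (e : a = b) : cast (eq_sym e) ∘ cast e = idm a.
Proof. rewrite cast_comp. apply cast_irr. Qed.
Lemma cast_inv2 {a b : A} (e : a = b) : cast e ∘ cast (eq_sym e) = idm b.
Proof. rewrite cast_comp. apply cast_irr. Qed.

Lemma thom_idcast {a b c : A} (e : b = c) : idm a ⊠ cast e = cast (f_equal (tob T a) e).
Proof. destruct e. simpl. rewrite thom_id. reflexivity. Qed.
Lemma thom_castid {a b c : A} (e : b = c) : cast e ⊠ idm a = cast (f_equal (fun z => tob T z a) e).
Proof. destruct e. simpl. rewrite thom_id. reflexivity. Qed.

Section WithBi.
Variables (D : hom B (B ⊗ B)) (eps : hom B I).
Hypothesis H : IsBialgebra A T B mB uB Br D eps.

Local Notation TM := (TM T Br B mB uB HB HI Hr D eps H).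
Local Notation UM := (UM T Br B mB uB D eps H).

Definition mhB (a b c d : MC) (f : hom a b) (g : hom c d) : @hom MC (TM a c) (TM b d).
Proof.
  refine (Build_ModMor A T B mB uB (TM a c) (TM b d) (mmh f ⊠ mmh g) _).
  unfold IsModMor. apply tact_nat. apply (mm_ax _ _ _ _ _ _ _ f). apply (mm_ax _ _ _ _ _ _ _ g).
Defined.

Definition maB (a b c : MC) : @hom MC (TM (TM a b) c) (TM a (TM b c)) :=
  Build_ModMor A T B mB uB (TM (TM a b) c) (TM a (TM b c)) (cast (tassoc T (ob_ a) (ob_ b) (ob_ c))) (alpha_mor T Br B mB uB HB HI Hr D eps H a b c).
Definition mlB (a : MC) : @hom MC (TM UM a) a :=
  Build_ModMor A T B mB uB (TM UM a) a (cast (tunitl T (ob_ a))) (lambda_mor T Br B mB uB HB HI Hr D eps H a).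
Definition mrB (a : MC) : @hom MC (TM a UM) a :=
  Build_ModMor A T B mB uB (TM a UM) a (cast (tunitr T (ob_ a))) (rho_mor T Br B mB uB HB HI Hr D eps H a).

Definition castMM (X Y : RM) (e : ob_ X = ob_ Y) (Hm : IsModMor A T B mB uB X Y (cast e)) : @hom MC Y X :=
  Build_ModMor A T B mB uB Y X (cast (eq_sym e))
    (modmor_inv X Y (cast e) (cast (eq_sym e)) (cast_inv1 e) (cast_inv2 e) Hm).

Definition MSB : MonStruct MC.
Proof.
  refine (Build_MonStruct MC TM mhB UM maB mlB mrB _ _ _ _ _ _ _ _ _ _).
  - intros a c. apply ModMor_eq. simpl. apply thom_id.
  - intros. apply ModMor_eq. simpl. apply thom_comp.
  - intros. apply ModMor_eq. simpl. apply thom_assoc.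
  - intros. apply ModMor_eq. simpl. apply (thom_unitl _ T).
  - intros. apply ModMor_eq. simpl. apply (thom_unitr _ T).
  - intros a b c. exists (castMM (TM (TM a b) c) (TM a (TM b c)) (tassoc T (ob_ a) (ob_ b) (ob_ c)) (alpha_mor T Br B mB uB HB HI Hr D eps H a b c)).
    split; apply ModMor_eq; simpl. apply cast_inv1. apply cast_inv2.
  - intros a. exists (castMM (TM UM a) a (tunitl T (ob_ a)) (lambda_mor T Br B mB uB HB HI Hr D eps H a)).
    split; apply ModMor_eq; simpl. apply cast_inv1. apply cast_inv2.
  - intros a. exists (castMM (TM a UM) a (tunitr T (ob_ a)) (rho_mor T Br B mB uB HB HI Hr D eps H a)).
    split; apply ModMor_eq; simpl. apply cast_inv1. apply cast_inv2.
  - intros a b c d. apply ModMor_eq. simpl.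
    rewrite thom_idcast, thom_castid, !cast_comp. apply cast_pi.
  - intros a b. apply ModMor_eq. simpl.
    rewrite thom_idcast, thom_castid, !cast_comp. apply cast_pi.
Defined.
Lemma MSB_strict : IsStrictMonoidalFunctor MSB T (Forget A T B mB uB).
Proof.
  exists (fun a b => eq_refl), eq_refl. split; [|split; [|split]].
  - intros. simpl. rewrite comp_idl, comp_idr. reflexivity.
  - intros. simpl. rewrite ?comp_idl, ?comp_idr; try reflexivity; rewrite ?cast_comp; apply cast_pi.
  - intros. simpl. rewrite ?comp_idl, ?comp_idr; try reflexivity; rewrite ?cast_comp; apply cast_pi.
  - intros. simpl. rewrite ?comp_idl, ?comp_idr; try reflexivity; rewrite ?cast_comp; apply cast_pi.
Qed.

End WithBi.

Definition Phi (x : BialgStr A T B mB uB Br) : ModMonStr A T B mB uB :=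
  exist _ (MSB (fst (proj1_sig x)) (snd (proj1_sig x)) (proj2_sig x))
          (MSB_strict (fst (proj1_sig x)) (snd (proj1_sig x)) (proj2_sig x)).

Lemma Phi_corr (x : BialgStr A T B mB uB Br) : Corresponds A T B mB uB Br (Phi x) x.
Proof.
  destruct x as [[D eps] H]. split.
  - intros M N e. simpl in *. rewrite !cast_irr, comp_idl, comp_idr. reflexivity.
  - intros e. simpl in *. rewrite !cast_irr, comp_idl, comp_idr. reflexivity.
Qed.

Lemma xb_Bm_u : xbar T B mB uB (Bm T B mB uB HB) uB = idm B.
Proof.
  unfold xbar. simpl. rewrite (proj1 (proj2 HB)). apply cast_inv2.
Qed.

Lemma D_recover (D : hom B (B ⊗ B)) :
  heq (tact (Bm T B mB uB HB) (Bm T B mB uB HB) D ∘ ((uB ⊠ uB) ⊠ idm B)) D.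
Proof.
  eapply heq_trans. apply tact_eval. rewrite xb_Bm_u, thom_id, comp_idl. apply heq_refl.
Qed.

Lemma Phi_inj (x y : BialgStr A T B mB uB Br) : Phi x = Phi y -> x = y.
Proof.
  intros E.
  pose proof (Phi_corr x) as [Cx1 Cx2]. pose proof (Phi_corr y) as [Cy1 Cy2].
  rewrite E in Cx1, Cx2.
  destruct x as [[Dx ex] Hx], y as [[Dy ey] Hy]. simpl in *.
  assert (ED : Dx = Dy).
  { specialize (Cx1 (Bm T B mB uB HB) (Bm T B mB uB HB) eq_refl). specialize (Cy1 (Bm T B mB uB HB) (Bm T B mB uB HB) eq_refl).
    simpl in Cx1, Cy1. rewrite comp_idl, comp_idr in Cx1, Cy1.
    assert (Et : tact (Bm T B mB uB HB) (Bm T B mB uB HB) Dx = tact (Bm T B mB uB HB) (Bm T B mB uB HB) Dy) by (symmetry; exact Cx1).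
    apply heq_eq. eapply heq_trans. apply heq_sym, D_recover. rewrite Et. apply D_recover. }
  assert (Ee : ex = ey).
  { specialize (Cx2 eq_refl). specialize (Cy2 eq_refl). simpl in Cx2, Cy2.
    rewrite comp_idl, comp_idr in Cx2.
    symmetry. exact (cast_cancel_r _ _ _ Cx2). }
  subst. f_equal. apply proof_irrelevance.
Qed.
End Build.

Section Surj.
Context {A : Cat} (T : SMC A) (Br : Braiding A T) (B : A) (mB : hom (tob T B B) B) (uB : hom (tI T) B).
Context (HB : IsAlgebra A T B mB uB).
Context (HI : RegularGenerator (tI T)).
Context (Hr : forall X : A,
      PreservesColimits (fun a : A => tob T a X) (fun a b (f : hom a b) => thom T f (idm X))).

Local Notation "a ⊗ b" := (tob T a b) (at level 30, right associativity).
Local Notation "f ⊠ g" := (thom T f g) (at level 35).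
Local Notation I := (tI T).
Local Notation RM := (RMod A T B mB uB).
Local Notation ob_ := (rm_ob A T B mB uB).
Local Notation act := (rm_act A T B mB uB).
Local Notation tact := (tensor_action A T B mB uB Br).
Local Notation MC := (ModCat A T B mB uB).
Local Notation MM := (ModMor A T B mB uB).
Local Notation mmh := (mm_hom A T B mB uB _ _).
Local Notation xb := (xbar T B mB uB).
Local Notation Bm := (Bm T B mB uB HB).

Variable M : MonStruct MC.
Variable eo : forall a b : MC, ob_ (mo M a b) = ob_ a ⊗ ob_ b.
Variable eI : ob_ (mI M) = I.
Hypothesis C1 : forall (a b c d : MC) (f : @hom MC a b) (g : @hom MC c d), heq (mmh (mh M f g)) (mmh f ⊠ mmh g).
Hypothesis C2 : forall a b c : MC, heq (mmh (malpha M a b c)) (cast (tassoc T (ob_ a) (ob_ b) (ob_ c))).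
Hypothesis C3 : forall a : MC, heq (mmh (mlam M a)) (cast (tunitl T (ob_ a))).
Hypothesis C4 : forall a : MC, heq (mmh (mrho M a)) (cast (tunitr T (ob_ a))).

Definition rh (P Q : MC) : hom ((ob_ P ⊗ ob_ Q) ⊗ B) (ob_ P ⊗ ob_ Q) :=
  cast (eo P Q) ∘ act (mo M P Q) ∘ cast (eq_sym (f_equal (fun z => z ⊗ B) (eo P Q))).

Lemma rh_heq (P Q : MC) : heq (rh P Q) (act (mo M P Q)).
Proof. unfold rh. apply heq_castr, heq_castl, heq_refl. Qed.

Lemma rh_nat (P P' Q Q' : MC) (f : @hom MC P P') (g : @hom MC Q Q') :
  (mmh f ⊠ mmh g) ∘ rh P Q = rh P' Q' ∘ ((mmh f ⊠ mmh g) ⊠ idm B).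
Proof.
  apply heq_eq.
  apply (heq_trans _ (mmh (mh M f g) ∘ act (mo M P Q))).
  - apply heq_comp. apply rh_heq. apply heq_sym, C1.
  - rewrite (mm_ax _ _ _ _ _ _ _ (mh M f g)). apply heq_comp.
    + apply heq_thom. apply C1. apply heq_refl.
    + apply heq_sym, rh_heq.
Qed.

Definition xbM (P : MC) (p : hom I (ob_ P)) : @hom MC Bm P :=
  Build_ModMor A T B mB uB Bm P (xb P p) (xbar_modmor T B mB uB HB P p).

Definition Ds : hom B (B ⊗ B) :=
  rh Bm Bm ∘ ((uB ⊠ uB) ⊠ idm B) ∘ cast (eq_trans (eq_sym (tunitl T B)) (f_equal (fun z => z ⊗ B) (eq_sym (tunitl T I)))).

Lemma KEY (P Q : MC) : rh P Q = tact P Q Ds.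
Proof.
  apply (JE2 T HI Hr (ob_ P) (ob_ Q) B). intros p q.
  rewrite <- (xbar_u T B mB uB P p), <- (xbar_u T B mB uB Q q).
  rewrite thom_comp, thom_compl, !comp_assoc.
  change (xb P p) with (mmh (xbM P p)). change (xb Q q) with (mmh (xbM Q q)).
  pose proof (rh_nat Bm P Bm Q (xbM P p) (xbM Q q)) as E1.
  pose proof (tact_natB T Br B mB uB HB P Q Ds _ _ (mm_ax _ _ _ _ _ _ _ (xbM P p)) (mm_ax _ _ _ _ _ _ _ (xbM Q q))) as E2.
  simpl in E1, E2. simpl. rewrite <- E1, <- E2.
  rewrite <- !comp_assoc. f_equal.
  apply heq_eq. eapply heq_trans. 2: apply heq_sym, D_recover.
  unfold Ds. apply heq_castr'. apply heq_refl.
Qed.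

Lemma act_heq (P Q : MC) : heq (act (mo M P Q)) (tact P Q Ds).
Proof. eapply heq_trans. apply heq_sym, rh_heq. rewrite KEY. apply heq_refl. Qed.

Lemma L_evalz (X Y : MC) {k i j G1 G2 : A} (z : hom k (ob_ (mo M X Y))) (x : hom i (ob_ X)) (y : hom j (ob_ Y))
  (x' : hom I (ob_ X)) (y' : hom I (ob_ Y)) (g : hom B G1) (g' : hom B G2) :
  heq z (x ⊠ y) -> heq x x' -> heq y y' -> heq (xb X x') g -> heq (xb Y y') g' ->
  heq (act (mo M X Y) ∘ (z ⊠ idm B)) ((g ⊠ g') ∘ Ds).
Proof.
  intros Hz Hx Hy Hg Hg'.
  eapply heq_trans. apply (heq_comp _ _ ((x ⊠ y) ⊠ idm B) (tact X Y Ds)).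
  apply heq_thom. exact Hz. apply heq_refl. apply act_heq.
  eapply heq_trans. apply (tact_eval2 T Br B mB uB Ds X Y x y x' y' (xb X x') (xb Y y')); auto using heq_refl.
  apply heq_comp. apply heq_refl. apply heq_thom; assumption.
Qed.

Lemma xbBmu : heq (xb Bm uB) (idm B).
Proof. rewrite xb_Bm_u. apply heq_refl. Qed.

Lemma XD (x : hom I (ob_ (mo M Bm Bm))) : heq x (uB ⊠ uB) -> heq (xb (mo M Bm Bm) x) Ds.
Proof.
  intros Hx. unfold xbar at 1. apply heq_castr.
  eapply heq_trans. apply (L_evalz Bm Bm x uB uB uB uB (idm B) (idm B)); auto using heq_refl, xbBmu.
  rewrite thom_id, comp_idl. apply heq_refl.
Qed.

Definition xBB : hom I (ob_ (mo M Bm Bm)) :=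
  cast (eq_sym (eo Bm Bm)) ∘ (uB ⊠ uB) ∘ cast (eq_sym (tunitl T I)).

Lemma xBB_heq : heq xBB (uB ⊠ uB).
Proof. unfold xBB. apply heq_castr, heq_castl, heq_refl. Qed.

Lemma S_coass : (Ds ⊠ idm B) ∘ Ds = cast (eq_sym (tassoc T B B B)) ∘ (idm B ⊠ Ds) ∘ Ds.
Proof.
  set (z1 := cast (eq_sym (eo (mo M Bm Bm) Bm)) ∘ (xBB ⊠ uB) ∘ cast (eq_sym (tunitl T I))).
  assert (Hz1 : heq z1 (xBB ⊠ uB)) by (unfold z1; apply heq_castr, heq_castl, heq_refl).
  pose proof (mm_ax _ _ _ _ _ _ _ (malpha M Bm Bm Bm)) as E. unfold IsModMor in E.
  assert (Hα : heq (mmh (malpha M Bm Bm Bm)) (idm ((B ⊗ B) ⊗ B))).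
  { eapply heq_trans. apply C2. apply heq_cast. }
  apply heq_eq. rewrite <- comp_assoc. apply heq_castl'.
  apply (heq_trans _ (mmh (malpha M Bm Bm Bm) ∘ act (mo M (mo M Bm Bm) Bm) ∘ (z1 ⊠ idm B))).
  - apply heq_sym. rewrite <- comp_assoc. apply (heq_compl_idd _ _ _ Hα).
    apply (L_evalz (mo M Bm Bm) Bm z1 xBB uB xBB uB Ds (idm B)); auto using heq_refl, xbBmu.
    apply XD, xBB_heq.
  - rewrite E, <- comp_assoc, <- thom_comp, comp_idl.
    apply (L_evalz Bm (mo M Bm Bm) _ uB xBB uB xBB (idm B) Ds); auto using heq_refl, xbBmu.
    + apply (heq_compl_idd _ _ _ Hα). eapply heq_trans. exact Hz1.
      eapply heq_trans. apply heq_thom. exact xBB_heq. apply heq_refl.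
      eapply heq_trans. apply heq_assoc. apply heq_thom. apply heq_refl. apply heq_sym, xBB_heq.
    + apply XD, xBB_heq.
Qed.

Definition epss : hom B I :=
  cast eI ∘ act (mI M) ∘ cast (eq_sym (f_equal (fun z => z ⊗ B) eI)) ∘ cast (eq_sym (tunitl T B)).
Definition ehat : hom (I ⊗ B) I :=
  cast eI ∘ act (mI M) ∘ cast (eq_sym (f_equal (fun z => z ⊗ B) eI)).

Lemma ehat_epss : ehat = epss ∘ cast (tunitl T B).
Proof. unfold epss, ehat. rewrite <- !comp_assoc, cast_comp, cast_irr, comp_idr. reflexivity. Qed.

Lemma ehat_heq : heq (act (mI M)) ehat.
Proof. unfold ehat. apply heq_castr', heq_castl', heq_refl. Qed.
Lemma epss_heq : heq (act (mI M)) epss.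
Proof. unfold epss. apply heq_castr', heq_castr', heq_castl', heq_refl. Qed.

Definition iI : hom I (ob_ (mI M)) := cast (eq_sym eI).
Lemma iI_heq : heq iI (idm I).
Proof. apply heq_cast. Qed.

Lemma xb_iI : heq (xb (mI M) iI) epss.
Proof.
  unfold xbar at 1. apply heq_castr. eapply heq_compr_idd.
  apply heq_thom_id. apply heq_cast'. apply heq_refl. apply epss_heq.
Qed.

Lemma heq_cast_inv {a b : A} (e1 : a = b) (e2 : b = a) : heq (cast e1) (cast e2).
Proof. eapply heq_trans. apply heq_cast. eapply heq_trans. apply (heq_idm e1). apply heq_sym, heq_cast. Qed.

Lemma heq_casts {a b c d : A} (e1 : a = b) (e2 : c = d) (e3 : a = c) : heq (cast e1) (cast e2).
Proof. eapply heq_trans. apply heq_cast. eapply heq_trans. apply (heq_idm e3). apply heq_sym, heq_cast. Qed.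

Lemma S_cl : (epss ⊠ idm B) ∘ Ds = cast (eq_sym (tunitl T B)).
Proof.
  set (z := cast (eq_sym (eo (mI M) Bm)) ∘ (iI ⊠ uB) ∘ cast (eq_sym (tunitl T I))).
  assert (Hz : heq z (iI ⊠ uB)) by (unfold z; apply heq_castr, heq_castl, heq_refl).
  pose proof (mm_ax _ _ _ _ _ _ _ (mlam M Bm)) as E. unfold IsModMor in E.
  assert (Hl : heq (mmh (mlam M Bm)) (idm B)).
  { eapply heq_trans. apply C3. apply heq_cast'. }
  apply heq_eq.
  apply (heq_trans _ (mmh (mlam M Bm) ∘ act (mo M (mI M) Bm) ∘ (z ⊠ idm B))).
  - apply heq_sym. rewrite <- comp_assoc. apply (heq_compl_idd _ _ _ Hl).
    apply (L_evalz (mI M) Bm z iI uB iI uB epss (idm B)); auto using heq_refl, xbBmu, xb_iI.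
  - rewrite E, <- comp_assoc, <- thom_comp, comp_idl.
    change (act Bm) with mB.
    apply (heq_trans _ (mB ∘ (uB ⊠ idm B))).
    + apply heq_comp. 2: apply heq_refl. apply heq_thom. 2: apply heq_refl.
      apply (heq_compl_idd _ _ _ Hl). eapply heq_trans. exact Hz.
      eapply heq_trans. apply heq_thom. apply iI_heq. apply heq_refl. apply heq_unitl.
    + rewrite (proj1 (proj2 HB)). apply heq_cast_inv.
Qed.

Lemma S_cr : (idm B ⊠ epss) ∘ Ds = cast (eq_sym (tunitr T B)).
Proof.
  set (z := cast (eq_sym (eo Bm (mI M))) ∘ (uB ⊠ iI) ∘ cast (eq_sym (tunitl T I))).
  assert (Hz : heq z (uB ⊠ iI)) by (unfold z; apply heq_castr, heq_castl, heq_refl).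
  pose proof (mm_ax _ _ _ _ _ _ _ (mrho M Bm)) as E. unfold IsModMor in E.
  assert (Hl : heq (mmh (mrho M Bm)) (idm B)).
  { eapply heq_trans. apply C4. apply heq_cast'. }
  apply heq_eq.
  apply (heq_trans _ (mmh (mrho M Bm) ∘ act (mo M Bm (mI M)) ∘ (z ⊠ idm B))).
  - apply heq_sym. rewrite <- comp_assoc. apply (heq_compl_idd _ _ _ Hl).
    apply (L_evalz Bm (mI M) z uB iI uB iI (idm B) epss); auto using heq_refl, xbBmu, xb_iI.
  - rewrite E, <- comp_assoc, <- thom_comp, comp_idl.
    change (act Bm) with mB.
    apply (heq_trans _ (mB ∘ (uB ⊠ idm B))).
    + apply heq_comp. 2: apply heq_refl. apply heq_thom. 2: apply heq_refl.
      apply (heq_compl_idd _ _ _ Hl). eapply heq_trans. exact Hz.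
      eapply heq_trans. apply heq_thom. apply heq_refl. apply iI_heq. apply heq_unitr.
    + rewrite (proj1 (proj2 HB)). apply heq_casts. exact (tunitl T B).
Qed.

Lemma DsX : heq (act (mo M Bm Bm) ∘ (xBB ⊠ idm B)) Ds.
Proof.
  eapply heq_trans. apply (L_evalz Bm Bm xBB uB uB uB uB (idm B) (idm B)); auto using heq_refl, xbBmu, xBB_heq.
  rewrite thom_id, comp_idl. apply heq_refl.
Qed.

Lemma tact_DsDs : tact Bm Bm Ds ∘ (Ds ⊠ idm B) =
  (mB ⊠ mB) ∘ cast (eq_sym (e4 A T B B B B)) ∘ ((idm B ⊠ br Br B B) ⊠ idm B) ∘ cast (e4 A T B B B B) ∘ (Ds ⊠ Ds).
Proof.
  rewrite tact_sig, <- !comp_assoc, <- thom_comp, comp_idl, comp_idr.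
  unfold sig4. rewrite <- !comp_assoc. reflexivity.
Qed.

Lemma S_comp : Ds ∘ mB =
  (mB ⊠ mB) ∘ cast (eq_sym (e4 A T B B B B)) ∘ ((idm B ⊠ br Br B B) ⊠ idm B) ∘ cast (e4 A T B B B B) ∘ (Ds ⊠ Ds).
Proof.
  destruct (rm_ax _ _ _ _ _ (mo M Bm Bm)) as [Hm1 Hm2].
  rewrite <- tact_DsDs. apply heq_eq.
  apply (heq_trans _ (act (mo M Bm Bm) ∘ (act (mo M Bm Bm) ⊠ idm B) ∘ ((xBB ⊠ idm B) ⊠ idm B))).
  - rewrite Hm1. apply heq_sym. rewrite <- !comp_assoc.
    apply (heq_trans _ (act (mo M Bm Bm) ∘ ((xBB ⊠ idm B) ∘ (idm I ⊠ mB)))).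
    + apply heq_comp. 2: apply heq_refl.
      apply (heq_trans _ ((idm _ ⊠ mB) ∘ (xBB ⊠ (idm B ⊠ idm B)))).
      * apply heq_comp. apply heq_castl, heq_assoc. apply heq_refl.
      * rewrite <- !thom_comp, thom_id, !comp_idl, !comp_idr. apply heq_refl.
    + rewrite comp_assoc. apply heq_comp. apply heq_unitl. apply DsX.
  - rewrite <- comp_assoc, <- thom_comp, comp_idl.
    apply heq_comp. apply heq_thom. apply DsX. apply heq_refl. apply act_heq.
Qed.

Lemma S_eu : epss ∘ uB = idm I.
Proof.
  destruct (rm_ax _ _ _ _ _ (mI M)) as [He1 He2].
  apply heq_eq. apply (heq_trans _ (act (mI M) ∘ (idm _ ⊠ uB))).
  - unfold epss. rewrite <- !comp_assoc. apply heq_castl. apply heq_comp. 2: apply heq_refl.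
    apply heq_castl, heq_castl. apply heq_sym.
    eapply heq_trans. apply heq_thom. apply (heq_idm eI). apply heq_refl. apply heq_unitl.
  - rewrite He2. eapply heq_trans. apply heq_cast'. apply heq_idm, eI.
Qed.

Lemma S_du : Ds ∘ uB = (uB ⊠ uB) ∘ cast (eq_sym (tunitl T I)).
Proof.
  destruct (rm_ax _ _ _ _ _ (mo M Bm Bm)) as [Hm1 Hm2].
  apply heq_eq. apply (heq_trans _ (act (mo M Bm Bm) ∘ (idm _ ⊠ uB) ∘ (xBB ⊠ idm I))).
  - unfold Ds. rewrite <- !comp_assoc. apply heq_comp. 2: apply rh_heq.
    apply (heq_trans _ ((uB ⊠ uB) ⊠ uB)).
    + apply (heq_trans _ (((uB ⊠ uB) ⊠ idm B) ∘ (idm (I ⊗ I) ⊠ uB))).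
      * apply heq_comp. 2: apply heq_refl. apply heq_castl. apply heq_sym.
        eapply heq_trans. apply heq_thom. apply (heq_idm (tunitl T I)). apply heq_refl. apply heq_unitl.
      * rewrite <- thom_comp, comp_idl, comp_idr. apply heq_refl.
    + rewrite <- thom_comp, comp_idl, comp_idr. apply heq_thom. apply heq_sym, xBB_heq. apply heq_refl.
  - rewrite Hm2. apply heq_castl, heq_castr'.
    eapply heq_trans. apply heq_unitr. apply xBB_heq.
Qed.

Lemma S_em : epss ∘ mB = cast (tunitl T I) ∘ (epss ⊠ epss).
Proof.
  destruct (rm_ax _ _ _ _ _ (mI M)) as [He1 He2].
  apply heq_eq.
  apply (heq_trans _ (act (mI M) ∘ (act (mI M) ⊠ idm B) ∘ ((iI ⊠ idm B) ⊠ idm B))).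
  - rewrite He1. apply heq_sym. rewrite <- !comp_assoc. apply heq_comp. 2: apply epss_heq.
    apply (heq_trans _ ((idm _ ⊠ mB) ∘ (iI ⊠ (idm B ⊠ idm B)))).
    + apply heq_comp. apply heq_castl, heq_assoc. apply heq_refl.
    + rewrite <- thom_comp, thom_id, comp_idl, comp_idr.
      eapply heq_trans. apply heq_thom. apply iI_heq. apply heq_refl. apply heq_unitl.
  - rewrite <- comp_assoc, <- thom_comp, comp_idl.
    apply (heq_trans _ (ehat ∘ (epss ⊠ idm B))).
    + apply heq_comp. 2: apply ehat_heq. apply heq_thom. 2: apply heq_refl.
      eapply heq_compr_idd. apply heq_thom_id. apply heq_cast'. apply heq_refl. apply epss_heq.
    + apply eq_heq. rewrite ehat_epss.
      replace (epss ⊠ epss) with ((idm I ⊠ epss) ∘ (epss ⊠ idm B)) by (rewrite <- thom_comp, comp_idl, comp_idr; reflexivity).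
      rewrite comp_assoc, (thom_unitl _ T). reflexivity.
Qed.

Lemma S_bialg : IsBialgebra A T B mB uB Br Ds epss.
Proof.
  split. exact S_coass. split. exact S_cl. split. exact S_cr. split. exact S_comp.
  split. exact S_eu. split. exact S_du. exact S_em.
Qed.

Lemma RMod_eq (X Y : RM) (e : ob_ X = ob_ Y) :
  cast e ∘ act X = act Y ∘ cast (f_equal (fun z => z ⊗ B) e) -> X = Y.
Proof.
  destruct X as [ox ax hx], Y as [oy ay hy]. simpl in *. intros E. destruct e. simpl in E.
  rewrite comp_idl, comp_idr in E. subst. f_equal. apply proof_irrelevance.
Qed.

Lemma MonStruct_ext (M1 M2 : MonStruct MC) :
  (forall a b, mo M1 a b = mo M2 a b) -> mI M1 = mI M2 ->
  (forall a b c d (f : @hom MC a b) (g : @hom MC c d), heq (mmh (mh M1 f g)) (mmh (mh M2 f g))) ->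
  (forall a b c, heq (mmh (malpha M1 a b c)) (mmh (malpha M2 a b c))) ->
  (forall a, heq (mmh (mlam M1 a)) (mmh (mlam M2 a))) ->
  (forall a, heq (mmh (mrho M1 a)) (mmh (mrho M2 a))) -> M1 = M2.
Proof.
  destruct M1 as [mo1 mh1 mI1 ma1 ml1 mr1 p1 p2 p3 p4 p5 p6 p7 p8 p9 p10],
           M2 as [mo2 mh2 mI2 ma2 ml2 mr2 q1 q2 q3 q4 q5 q6 q7 q8 q9 q10]. simpl.
  intros Hmo HmI Hmh Hma Hml Hmr.
  assert (E1 : mo1 = mo2).
  { apply functional_extensionality; intros a; apply functional_extensionality; intros b; apply Hmo. }
  subst mo2 mI2.
  assert (E2 : mh1 = mh2).
  { repeat (apply functional_extensionality_dep; intro). apply ModMor_eq. apply heq_eq. apply Hmh. }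
  assert (E3 : ma1 = ma2).
  { repeat (apply functional_extensionality_dep; intro). apply ModMor_eq. apply heq_eq. apply Hma. }
  assert (E4 : ml1 = ml2).
  { repeat (apply functional_extensionality_dep; intro). apply ModMor_eq. apply heq_eq. apply Hml. }
  assert (E5 : mr1 = mr2).
  { repeat (apply functional_extensionality_dep; intro). apply ModMor_eq. apply heq_eq. apply Hmr. }
  subst. f_equal; apply proof_irrelevance.
Qed.

Lemma MSB_eq : MSB T Br B mB uB HB HI Hr Ds epss S_bialg = M.
Proof.
  apply MonStruct_ext.
  - intros a b. symmetry. apply (RMod_eq (mo M a b) (mo (MSB T Br B mB uB HB HI Hr Ds epss S_bialg) a b) (eo a b)).
    change (act (mo (MSB T Br B mB uB HB HI Hr Ds epss S_bialg) a b)) with (tact a b Ds).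
    rewrite <- KEY. unfold rh. rewrite <- !comp_assoc, cast_comp, cast_irr, comp_idr. reflexivity.
  - symmetry. apply (RMod_eq (mI M) (mI (MSB T Br B mB uB HB HI Hr Ds epss S_bialg)) eI).
    change (act (mI (MSB T Br B mB uB HB HI Hr Ds epss S_bialg))) with (epss ∘ cast (tunitl T B)).
    rewrite <- ehat_epss. unfold ehat. rewrite <- !comp_assoc, cast_comp, cast_irr, comp_idr. reflexivity.
  - intros. simpl. apply heq_sym, C1.
  - intros. simpl. apply heq_sym, C2.
  - intros. simpl. apply heq_sym, C3.
  - intros. simpl. apply heq_sym, C4.
Qed.

End Surj.

Lemma sig_eq_pi {X : Type} (P : X -> Prop) (x y : sig P) : proj1_sig x = proj1_sig y -> x = y.
Proof. destruct x, y. simpl. intros ->. f_equal. apply proof_irrelevance. Qed.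

Theorem mainTheorem3 (A : Cat) (T : SMC A) (Br : Braiding A T)
  (HI : RegularGenerator (tI T))
  (Hr : forall X : A,
      PreservesColimits (fun a : A => tob T a X) (fun a b (f : hom a b) => thom T f (idm X)))
  (Hl : forall X : A,
      PreservesColimits (fun a : A => tob T X a) (fun a b (f : hom a b) => thom T (idm X) f))
  (B : A) (mB : hom (tob T B B) B) (uB : hom (tI T) B)
  (HB : IsAlgebra A T B mB uB) :
  exists Phi : BialgStr A T B mB uB Br -> ModMonStr A T B mB uB,
    (forall x y, Phi x = Phi y -> x = y) /\
    (forall s, exists x, Phi x = s) /\
    (forall x, Corresponds A T B mB uB Br (Phi x) x).
Proof.
  exists (Phi T Br B mB uB HB HI Hr). split; [|split].
  - apply Phi_inj.
  - intros [M HM]. pose proof HM as HM'.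
    destruct HM' as [eo [eI [H1 [H2 [H3 H4]]]]].
    assert (C1 : forall (a b c d : ModCat A T B mB uB) (f : hom a b) (g : hom c d),
               heq (mm_hom A T B mB uB _ _ (mh M f g))
                   (thom T (mm_hom A T B mB uB _ _ f) (mm_hom A T B mB uB _ _ g))).
    { intros. exists (eo a c), (eo b d). apply H1. }
    assert (C2 : forall a b c : ModCat A T B mB uB,
               heq (mm_hom A T B mB uB _ _ (malpha M a b c))
                   (cast (tassoc T (rm_ob A T B mB uB a) (rm_ob A T B mB uB b) (rm_ob A T B mB uB c)))).
    { intros. eexists. eexists. apply H2. }
    assert (C3 : forall a : ModCat A T B mB uB,
               heq (mm_hom A T B mB uB _ _ (mlam M a)) (cast (tunitl T (rm_ob A T B mB uB a)))).
    { intros. eexists. exists eq_refl. simpl. rewrite comp_idl. apply H3. }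
    assert (C4 : forall a : ModCat A T B mB uB,
               heq (mm_hom A T B mB uB _ _ (mrho M a)) (cast (tunitr T (rm_ob A T B mB uB a)))).
    { intros. eexists. exists eq_refl. simpl. rewrite comp_idl. apply H4. }
    exists (exist _ (Ds T B mB uB HB M eo, epss T B mB uB M eI) (S_bialg T Br B mB uB HB HI Hr M eo eI C1 C2 C3 C4)).
    apply sig_eq_pi. simpl. apply MSB_eq.
  - apply Phi_corr.
Qed.
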